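(* Let $\lambda,a,b\in\mathbb{C}$ with $\lambda\neq0$ and $ab\neq-1$, and let $s\in\mathbb{C}$ satisfy $s^2=\frac{1}{ab+1}$. Define the following odd $4\times4$ complex matrices: $$T_3^\lambda=\lambda E_{13}+aE_{42},\quad T_2^\lambda=-\lambda E_{14}+aE_{32},\quad D_4^\lambda=\lambda E_{24}+aE_{31},\quad D_1^\lambda=-\lambda E_{23}+aE_{41},$$ $$T_1^\lambda=bE_{14}+\lambda^{-1}E_{32},\quad T_4^\lambda=bE_{13}-\lambda^{-1}E_{42},\quad D_2^\lambda=bE_{23}+\lambda^{-1}E_{41},\quad D_3^\lambda=bE_{24}-\lambda^{-1}E_{31}.$$ Then the linear map $\theta:\widehat{\mathfrak{psl}}(2|2)\to\mathfrak{gl}(2|2)$ given on the basis by $$\theta(\tilde C_{11})=sD_4^\lambda,\ \theta(\tilde C_{12})=sT_2^\lambda,\ \theta(\tilde C_{22})=sT_3^\lambda,\ \theta(\tilde C_{21})=sD_1^\lambda,$$ $$\theta(\tilde B_{11})=sT_4^\lambda,\ \theta(\tilde B_{12})=sT_1^\lambda,\ \theta(\tilde B_{22})=sD_3^\lambda,\ \theta(\tilde B_{21})=sD_2^\lambda,$$ $$\theta(\tilde E_1)=E_{12},\ \theta(\tilde F_1)=E_{21},\ \theta(\tilde H_1)=E_{11}-E_{22},\ \theta(\tilde E_2)=E_{43},\ \theta(\tilde F_2)=E_{34},\ \theta(\tilde H_2)=E_{33}-E_{44},$$ $$\theta(c)=\frac{s^2(ab-1)}{2}I_4,\quad \theta(c_+)=s^2\lambda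 a\,I_4,\quad \theta(c_-)=s^2\lambda^{-1}b\,I_4,$$ is an irreducible representation of the universal central extension $\widehat{\mathfrak{psl}}(2|2)$ on the $(2|2)$-dimensional complex superspace $\mathbb{C}^{2|2}$. This gives a three-parameter family of irreducible $(2|2)$-dimensional representations depending on $(\lambda,a,b)$.
   Context: $\mathfrak{gl}(2|2)$ denotes the Lie superalgebra of complex $4\times4$ matrices acting on $\mathbb{C}^{2|2}$, with basis vectors $1,2$ even and $3,4$ odd, with supercommutator bracket $[X,Y]=XY-(-1)^{p(X)p(Y)}YX$; $E_{kl}$ is the matrix unit at $(k,l)$ and $I_4$ the identity. $\mathfrak{sl}(2|2)$ consists of matrices $\begin{pmatrix}A&B\\ C&D\end{pmatrix}$ ($2\times2$ blocks) with $\mathrm{tr}A=\mathrm{tr}D$, and $\mathfrak{psl}(2|2)=\mathfrak{sl}(2|2)/\mathbb{C}I_4$. In $\mathfrak{psl}(2|2)$ let $\tilde E_1,\tilde F_1,\tilde H_1,\tilde E_2,\tilde F_2,\tilde H_2$ be the images of $E_{12},E_{21},E_{11}-E_{22},E_{43},E_{34},E_{33}-E_{44}$, and for $i,j\in\{1,2\}$ let $\tilde B_{ij}$ be the image of $E_{i,j+2}$ and $\tilde C_{ij}$ the image of $E_{i+2,j}$ (these 14 elements form a basis of $\mathfrak{psl}(2|2)$). The universal central extension is $\widehat{\mathfrak{psl}}(2|2)=\mathfrak{psl}(2|2)\oplus\mathrm{Span}(c_+,c,c_-)$ with $c,c_\pm$ even and central and bracket $[(g_1,x_1),(g_2,x_2)]=([g_1,g_2],f(g_1,g_2))$,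 where the 2-cocycle $f$ is supersymmetric on odd elements, vanishes if an argument is even, and on odd basis elements is given by $f(\tilde B_{12},\tilde C_{21})=f(\tilde C_{12},\tilde B_{21})=f(\tilde C_{22},\tilde B_{22})=f(\tilde B_{11},\tilde C_{11})=c$, $f(\tilde C_{22},\tilde C_{11})=-f(\tilde C_{12},\tilde C_{21})=c_+$, $f(\tilde B_{12},\tilde B_{21})=-f(\tilde B_{11},\tilde B_{22})=c_-$, and zero on all other pairs of basis elements (up to symmetry). An element $g\in\mathfrak{psl}(2|2)$ is identified with $(g,0)$. *)

(* Defs.v *)
From HB Require Import structures.
From mathcomp Require Import all_boot all_order all_algebra.
From mathcomp Require Import complex.
Set Implicit Arguments. Unset Strict Implicit. Unset Printing Implicit Defensive.
Import Order.TTheory GRing.Theory Num.Theory.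
Local Open Scope ring_scope.

(* Basis of psl(2|2): images of E12, E21, E11-E22, E43, E34, E33-E44,
   B_ij = E_{i,j+2}, C_ij = E_{i+2,j}. *)
Inductive pb := E1 | F1 | H1 | E2 | F2 | H2
              | B11 | B12 | B21 | B22 | C11 | C12 | C21 | C22.
Scheme Equality for pb.
Inductive cb := cc | cplus | cminus.
Scheme Equality for cb.

Definition pb_all : seq pb :=
  [:: E1; F1; H1; E2; F2; H2; B11; B12; B21; B22; C11; C12; C21; C22].
Definition cb_all : seq cb := [:: cc; cplus; cminus].

Definition pb_odd (x : pb) : bool :=
  match x with B11 | B12 | B21 | B22 | C11 | C12 | C21 | C22 => true
             | _ => false end.

(* An element of hat-psl(2|2) = psl(2|2) (+) Span(c,c_+,c_-) is given by its
   coordinates (u : pb -> F, z : cb -> F) in the basis above. *)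
Definition pbasis (F : fieldType) (x : pb) : pb -> F :=
  fun y => if pb_beq x y then 1 else 0.
Definition cbasis (F : fieldType) (c : cb) : cb -> F :=
  fun d => if cb_beq c d then 1 else 0.
Definition zero_p (F : fieldType) : pb -> F := fun _ => 0.
Definition zero_c (F : fieldType) : cb -> F := fun _ => 0.

(* matrix unit E_{kl} (1-based indices) in gl(2|2) *)
Definition Emx (F : fieldType) (k l : nat) : 'M[F]_4 :=
  delta_mx (inord k.-1) (inord l.-1).

(* basis vectors 1,2 are even, 3,4 are odd (0-based: 0,1 even; 2,3 odd) *)
Definition idx_odd (i : 'I_4) : bool := (2 <= i)%N.

Definition homog (F : fieldType) (p : bool) (M : 'M[F]_4) : Prop :=
  forall i j : 'I_4, addb (idx_odd i) (idx_odd j) != p -> M i j = 0.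

Definition scomm (F : fieldType) (p q : bool) (X Y : 'M[F]_4) : 'M[F]_4 :=
  X *m Y - (if p && q then -1 else 1) *: (Y *m X).

(* the chosen representative in sl(2|2) of each basis element of psl(2|2) *)
Definition psl_rep (F : fieldType) (x : pb) : 'M[F]_4 :=
  match x with
  | E1 => Emx F 1 2 | F1 => Emx F 2 1 | H1 => Emx F 1 1 - Emx F 2 2
  | E2 => Emx F 4 3 | F2 => Emx F 3 4 | H2 => Emx F 3 3 - Emx F 4 4
  | B11 => Emx F 1 3 | B12 => Emx F 1 4 | B21 => Emx F 2 3 | B22 => Emx F 2 4
  | C11 => Emx F 3 1 | C12 => Emx F 3 2 | C21 => Emx F 4 1 | C22 => Emx F 4 2
  end.

Definition psl_lin (F : fieldType) (w : pb -> F) : 'M[F]_4 :=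
  \sum_(x <- pb_all) w x *: psl_rep F x.

Definition cocycle_raw (F : fieldType) (x y : pb) (c : cb) : F :=
  match x, y, c with
  | B12, C21, cc => 1 | C12, B21, cc => 1 | C22, B22, cc => 1 | B11, C11, cc => 1
  | C22, C11, cplus => 1 | C12, C21, cplus => -1
  | B12, B21, cminus => 1 | B11, B22, cminus => -1
  | _, _, _ => 0
  end.

Definition cocycle (F : fieldType) (x y : pb) : cb -> F :=
  fun c => if pb_odd x && pb_odd y
           then cocycle_raw F x y c + cocycle_raw F y x c else 0.

(* The bracket of basis elements
   x, y of psl(2|2) in hat-psl(2|2) is ([x,y], f(x,y)) where [x,y] in psl(2|2)
   has coordinates w, i.e. psl_lin w is congruent modulo C*I_4 to the
   supercommutator of the representatives; central elements bracket to 0. *)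
Definition is_rep_hpsl (F : fieldType)
    (th : (pb -> F) -> (cb -> F) -> 'M[F]_4) : Prop :=
  [/\ (forall (k : F) (u1 u2 : pb -> F) (z1 z2 : cb -> F),
         th (fun x => k * u1 x + u2 x) (fun c => k * z1 c + z2 c)
         = k *: th u1 z1 + th u2 z2),
      (forall x : pb, homog (pb_odd x) (th (pbasis F x) (zero_c F))),
      (forall c : cb, homog false (th (zero_p F) (cbasis F c))),
      (forall (x y : pb) (w : pb -> F),
         (exists k : F, psl_lin w
              - scomm (pb_odd x) (pb_odd y) (psl_rep F x) (psl_rep F y) = k%:M) ->
         th w (cocycle F x y)
         = scomm (pb_odd x) (pb_odd y)
             (th (pbasis F x) (zero_c F)) (th (pbasis F y) (zero_c F)))
    & (forall (c : cb) (x : pb),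
         scomm false (pb_odd x) (th (zero_p F) (cbasis F c))
               (th (pbasis F x) (zero_c F)) = 0
         /\ forall d : cb,
         scomm false false (th (zero_p F) (cbasis F c))
               (th (zero_p F) (cbasis F d)) = 0)].

Definition even_proj (F : fieldType) : 'M[F]_4 :=
  \matrix_(i, j) (if (i == j) && ~~ idx_odd i then 1 else 0).

(* Subspaces are
   row spaces of U; vectors are rows, so v |-> th(g) v reads u |-> u *m th(g)^T. *)
Definition is_irreducible_srep (F : fieldType)
    (th : (pb -> F) -> (cb -> F) -> 'M[F]_4) : Prop :=
  forall U : 'M[F]_4,
    (U *m even_proj F <= U)%MS ->
    (forall (u : pb -> F) (z : cb -> F), (U *m (th u z)^T <= U)%MS) ->
    U = 0 \/ row_full U.

Definition T3m (F : fieldType) (l a : F) : 'M[F]_4 := l *: Emx F 1 3 + a *: Emx F 4 2.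
Definition T2m (F : fieldType) (l a : F) : 'M[F]_4 := - l *: Emx F 1 4 + a *: Emx F 3 2.
Definition D4m (F : fieldType) (l a : F) : 'M[F]_4 := l *: Emx F 2 4 + a *: Emx F 3 1.
Definition D1m (F : fieldType) (l a : F) : 'M[F]_4 := - l *: Emx F 2 3 + a *: Emx F 4 1.
Definition T1m (F : fieldType) (l b : F) : 'M[F]_4 := b *: Emx F 1 4 + l^-1 *: Emx F 3 2.
Definition T4m (F : fieldType) (l b : F) : 'M[F]_4 := b *: Emx F 1 3 - l^-1 *: Emx F 4 2.
Definition D2m (F : fieldType) (l b : F) : 'M[F]_4 := b *: Emx F 2 3 + l^-1 *: Emx F 4 1.
Definition D3m (F : fieldType) (l b : F) : 'M[F]_4 := b *: Emx F 2 4 - l^-1 *: Emx F 3 1.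

Definition theta_psl (F : fieldType) (l a b s : F) (x : pb) : 'M[F]_4 :=
  match x with
  | C11 => s *: D4m l a | C12 => s *: T2m l a
  | C22 => s *: T3m l a | C21 => s *: D1m l a
  | B11 => s *: T4m l b | B12 => s *: T1m l b
  | B22 => s *: D3m l b | B21 => s *: D2m l b
  | E1 => Emx F 1 2 | F1 => Emx F 2 1 | H1 => Emx F 1 1 - Emx F 2 2
  | E2 => Emx F 4 3 | F2 => Emx F 3 4 | H2 => Emx F 3 3 - Emx F 4 4
  end.

Definition theta_cent (F : fieldType) (l a b s : F) (c : cb) : 'M[F]_4 :=
  match c with
  | cc => (s ^+ 2 * (a * b - 1) / 2)%:M
  | cplus => (s ^+ 2 * l * a)%:M
  | cminus => (s ^+ 2 * l^-1 * b)%:M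
  end.

Definition theta (F : fieldType) (l a b s : F) (u : pb -> F) (z : cb -> F)
    : 'M[F]_4 :=
  \sum_(x <- pb_all) u x *: theta_psl l a b s x
  + \sum_(c <- cb_all) z c *: theta_cent l a b s c.

(* Main.v *)
Require Import Defs.
From HB Require Import structures.
From mathcomp Require Import all_boot all_order all_algebra.
From mathcomp Require Import complex.
From mathcomp Require Import ring.
Set Implicit Arguments. Unset Strict Implicit. Unset Printing Implicit Defensive.
Import GRing.Theory Num.Theory.
Local Open Scope ring_scope.


Definition ov (F : fieldType) (o : option F) : F := if o is Some x then x else 0.
Definition addO (F : fieldType) (x y : option F) : option F :=
  match x, y with None, _ => y | _, None => x | Some u, Some v => Some (u + v) end.
Definition mulO (F : fieldType) (x y : option F) : option F :=
  match x, y with Some u, Some v => Some (u * v) | _, _ => None end.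
Definition negO (F : fieldType) (x : option F) : option F :=
  match x with Some u => Some (- u) | None => None end.
Definition bl (i : nat) : bool := match i with 0 | 1 => true | _ => false end.

Definition mkf (F : fieldType) (f : nat -> nat -> option F) : 'M[F]_4 :=
  \matrix_(i, j) ov (f i j).

Lemma ovD (F : fieldType) (x y : option F) : ov (addO x y) = ov x + ov y.
Proof. by case: x => [u|]; case: y => [v|] /=; rewrite ?addr0 ?add0r. Qed.
Lemma ovM (F : fieldType) (x y : option F) : ov (mulO x y) = ov x * ov y.
Proof. by case: x => [u|]; case: y => [v|] /=; rewrite ?mulr0 ?mul0r. Qed.
Lemma ovN (F : fieldType) (x : option F) : ov (negO x) = - ov x.
Proof. by case: x => [u|] /=; rewrite ?oppr0. Qed.

Lemma mkfE (F : fieldType) f (i j : 'I_4) : mkf f i j = ov (f i j) :> F.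
Proof. by rewrite mxE. Qed.
Lemma mkfD (F : fieldType) f g :
  mkf f + mkf g = mkf (fun i j => addO (f i j) (g i j)) :> 'M[F]_4.
Proof. by apply/matrixP=> i j; rewrite !mxE ovD. Qed.
Lemma mkfN (F : fieldType) f :
  - mkf f = mkf (fun i j => negO (f i j)) :> 'M[F]_4.
Proof. by apply/matrixP=> i j; rewrite !mxE ovN. Qed.
Lemma mkfZv (F : fieldType) (o : option F) f :
  ov o *: mkf f = mkf (fun i j => mulO o (f i j)) :> 'M[F]_4.
Proof. by apply/matrixP=> i j; rewrite !mxE ovM. Qed.
Lemma mkfZ (F : fieldType) (a : F) f :
  a *: mkf f = mkf (fun i j => mulO (Some a) (f i j)) :> 'M[F]_4.
Proof. exact: (mkfZv (Some a)). Qed.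
Lemma mkfM (F : fieldType) f g :
  mkf f *m mkf g = mkf (fun i j => addO (addO (addO (mulO (f i 0%N) (g 0%N j))
     (mulO (f i 1%N) (g 1%N j))) (mulO (f i 2%N) (g 2%N j))) (mulO (f i 3%N) (g 3%N j)))
  :> 'M[F]_4.
Proof.
apply/matrixP=> i j; rewrite !mxE !big_ord_recl big_ord0 !mxE !ovD !ovM.
by rewrite addr0 !addrA.
Qed.
Lemma mkfS (F : fieldType) (a : F) :
  a%:M = mkf (fun i j => if eqn i j then Some a else None) :> 'M[F]_4.
Proof.
apply/matrixP=> i j; rewrite !mxE -val_eqE /=.
by case: eqnP => /= [->|/eqP/negbTE ->]; rewrite ?eqxx.
Qed.
Lemma mkfEmx (F : fieldType) k l : (0 < k <= 4)%N -> (0 < l <= 4)%N ->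
  Emx F k l = mkf (fun i j => if eqn i k.-1 && eqn j l.-1 then Some 1 else None).
Proof.
move=> /andP[k0 hk] /andP[l0 hl]; apply/matrixP=> i j.
rewrite /Emx !mxE -!val_eqE /= !inordK ?prednK //.
have E : forall m n, eqn m n = (m == n) by [].
by rewrite !E; case: (_ && _).
Qed.

Lemma mkf_eq16 (F : fieldType) (f g : nat -> nat -> option F) :
  ov (f 0%N 0%N) = ov (g 0%N 0%N) ->
  ov (f 0%N 1%N) = ov (g 0%N 1%N) ->
  ov (f 0%N 2%N) = ov (g 0%N 2%N) ->
  ov (f 0%N 3%N) = ov (g 0%N 3%N) ->
  ov (f 1%N 0%N) = ov (g 1%N 0%N) ->
  ov (f 1%N 1%N) = ov (g 1%N 1%N) ->
  ov (f 1%N 2%N) = ov (g 1%N 2%N) ->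
  ov (f 1%N 3%N) = ov (g 1%N 3%N) ->
  ov (f 2%N 0%N) = ov (g 2%N 0%N) ->
  ov (f 2%N 1%N) = ov (g 2%N 1%N) ->
  ov (f 2%N 2%N) = ov (g 2%N 2%N) ->
  ov (f 2%N 3%N) = ov (g 2%N 3%N) ->
  ov (f 3%N 0%N) = ov (g 3%N 0%N) ->
  ov (f 3%N 1%N) = ov (g 3%N 1%N) ->
  ov (f 3%N 2%N) = ov (g 3%N 2%N) ->
  ov (f 3%N 3%N) = ov (g 3%N 3%N) ->
  mkf f = mkf g.
Proof.
move=> *; apply/matrixP=> -[[|[|[|[|i]]]] hi] // -[[|[|[|[|j]]]] hj] //; by rewrite !mxE.
Qed.

Definition evenpart (F : fieldType) (M : 'M[F]_4) : 'M[F]_4 :=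
  \matrix_(i, j) (if idx_odd i == idx_odd j then M i j else 0).
Lemma evenpart_mkf (F : fieldType) f :
  evenpart (mkf f) = mkf (fun i j => if Bool.eqb (bl i) (bl j) then f i j else None) :> 'M[F]_4.
Proof.
apply/matrixP=> -[[|[|[|[|i]]]] hi] // -[[|[|[|[|j]]]] hj] //; by rewrite !mxE.
Qed.

Ltac tomkf := rewrite ?mkfEmx // ?mkfS ?evenpart_mkf;
  rewrite !(mkfE, mkfZv, mkfZ, mkfM, mkfN, mkfD, evenpart_mkf).
Ltac fin16 := apply: mkf_eq16;
  cbv [ov addO mulO negO bl eqn andb Bool.eqb nat_of_ord Nat.pred].

Lemma scommZl (F : fieldType) p q (c : F) (A B : 'M[F]_4) :
  scomm p q (c *: A) B = c *: scomm p q A B.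
Proof. by rewrite /scomm -scalemxAl -scalemxAr scalerBr !scalerA mulrC. Qed.
Lemma scommZr (F : fieldType) p q (c : F) (A B : 'M[F]_4) :
  scomm p q A (c *: B) = c *: scomm p q A B.
Proof. by rewrite /scomm -scalemxAl -scalemxAr scalerBr !scalerA mulrC. Qed.

Notation o0 := (@Ordinal 4 0 isT).
Notation o1 := (@Ordinal 4 1 isT).
Notation o2 := (@Ordinal 4 2 isT).
Notation o3 := (@Ordinal 4 3 isT).

Definition Phi (F : fieldType) (l a b s : F) (M : 'M[F]_4) : 'M[F]_4 :=
  evenpart M
  + M o0 o2 *: theta_psl l a b s B11 + M o0 o3 *: theta_psl l a b s B12
  + M o1 o2 *: theta_psl l a b s B21 + M o1 o3 *: theta_psl l a b s B22
  + M o2 o0 *: theta_psl l a b s C11 + M o2 o1 *: theta_psl l a b s C12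
  + M o3 o0 *: theta_psl l a b s C21 + M o3 o1 *: theta_psl l a b s C22.

Definition Pair (F : fieldType) (l a b s : F) (x y : pb) : Prop :=
  let S := scomm (pb_odd x) (pb_odd y) (psl_rep F x) (psl_rep F y) in
  Phi l a b s S + (- ((S o0 o0 + S o1 o1) / 2) + cocycle F x y cc * (s ^+ 2 * (a * b - 1) / 2)
     + cocycle F x y cplus * (s ^+ 2 * l * a) + cocycle F x y cminus * (s ^+ 2 * l^-1 * b))%:M
  = scomm (pb_odd x) (pb_odd y) (theta_psl l a b s x) (theta_psl l a b s y).

Definition fmat (F : fieldType) := nat -> nat -> option F.
Definition unitF (F : fieldType) (k l : nat) : fmat F :=
  fun i j => if eqn i k && eqn j l then Some 1 else None.
Definition addF (F : fieldType) (f g : fmat F) : fmat F := fun i j => addO (f i j) (g i j).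
Definition negF (F : fieldType) (f : fmat F) : fmat F := fun i j => negO (f i j).
Definition scF (F : fieldType) (c : F) (f : fmat F) : fmat F := fun i j => mulO (Some c) (f i j).
Definition mulOF (F : fieldType) (o : option F) (f : fmat F) : fmat F := fun i j => mulO o (f i j).
Definition evenF (F : fieldType) (f : fmat F) : fmat F :=
  fun i j => if Bool.eqb (bl i) (bl j) then f i j else None.
Definition mulF (F : fieldType) (f g : fmat F) : fmat F :=
  fun i j => addO (addO (addO (mulO (f i 0%N) (g 0%N j))
     (mulO (f i 1%N) (g 1%N j))) (mulO (f i 2%N) (g 2%N j))) (mulO (f i 3%N) (g 3%N j)).
Definition scommF (F : fieldType) (p q : bool) (f g : fmat F) : fmat F :=
  addF (mulF f g) (negF (scF (if p && q then -1 else 1) (mulF g f))).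

Definition repF (F : fieldType) (x : pb) : fmat F :=
  match x with
  | E1 => unitF F 0 1 | F1 => unitF F 1 0 | H1 => addF (unitF F 0 0) (negF (unitF F 1 1))
  | E2 => unitF F 3 2 | F2 => unitF F 2 3 | H2 => addF (unitF F 2 2) (negF (unitF F 3 3))
  | B11 => unitF F 0 2 | B12 => unitF F 0 3 | B21 => unitF F 1 2 | B22 => unitF F 1 3
  | C11 => unitF F 2 0 | C12 => unitF F 2 1 | C21 => unitF F 3 0 | C22 => unitF F 3 1
  end.

Definition ThF (F : fieldType) (l a b : F) (x : pb) : fmat F :=
  match x with
  | C11 => addF (scF l (unitF F 1 3)) (scF a (unitF F 2 0))
  | C12 => addF (scF (- l) (unitF F 0 3)) (scF a (unitF F 2 1))
  | C22 => addF (scF l (unitF F 0 2)) (scF a (unitF F 3 1))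
  | C21 => addF (scF (- l) (unitF F 1 2)) (scF a (unitF F 3 0))
  | B11 => addF (scF b (unitF F 0 2)) (negF (scF l^-1 (unitF F 3 1)))
  | B12 => addF (scF b (unitF F 0 3)) (scF l^-1 (unitF F 2 1))
  | B22 => addF (scF b (unitF F 1 3)) (negF (scF l^-1 (unitF F 2 0)))
  | B21 => addF (scF b (unitF F 1 2)) (scF l^-1 (unitF F 3 0))
  | _ => repF F x
  end.

Lemma rep_mkf (F : fieldType) x : psl_rep F x = mkf (repF F x).
Proof. by case: x; rewrite /= ?mkfEmx // ?mkfN ?mkfD. Qed.

Lemma theta_mkf (F : fieldType) (l a b s : F) x :
  theta_psl l a b s x = (if pb_odd x then s else 1) *: mkf (ThF l a b x).
Proof.
case: x; rewrite /= ?scale1r ?rep_mkf //.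
all: rewrite /T4m /D4m /T3m /T2m /D1m /T1m /D2m /D3m ?mkfEmx //. all: try congr (_ *: _); rewrite ?mkfZ ?mkfN mkfD //.
Qed.

Lemma mkf_ext (F : fieldType) (f g : fmat F) :
  (forall i j, ov (f i j) = ov (g i j)) -> mkf f = mkf g.
Proof. by move=> h; apply/matrixP=> i j; rewrite !mxE h. Qed.

Lemma scomm_mkf (F : fieldType) p q (f g : fmat F) :
  scomm p q (mkf f) (mkf g) = mkf (scommF p q f g).
Proof. by rewrite /scomm !mkfM mkfZ mkfN mkfD. Qed.

Definition PhiF (F : fieldType) (l a b s : F) (f : fmat F) : fmat F :=
  addF (addF (addF (addF (addF (addF (addF (addF (evenF f)
    (mulOF (f 0%N 2%N) (scF s (ThF l a b B11))))
    (mulOF (f 0%N 3%N) (scF s (ThF l a b B12))))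
    (mulOF (f 1%N 2%N) (scF s (ThF l a b B21))))
    (mulOF (f 1%N 3%N) (scF s (ThF l a b B22))))
    (mulOF (f 2%N 0%N) (scF s (ThF l a b C11))))
    (mulOF (f 2%N 1%N) (scF s (ThF l a b C12))))
    (mulOF (f 3%N 0%N) (scF s (ThF l a b C21))))
    (mulOF (f 3%N 1%N) (scF s (ThF l a b C22))).

Lemma Phi_mkf (F : fieldType) (l a b s : F) f :
  Phi l a b s (mkf f) = mkf (PhiF l a b s f).
Proof.
rewrite /Phi !theta_mkf /= evenpart_mkf !mkfE !mkfZ !mkfD.
apply: mkf_ext => i j.
rewrite /PhiF /addF /mulOF /scF !ovD !ovM.
by [].
Qed.


Ltac pairtac hs :=
  cbv [Pair]; rewrite !theta_mkf !rep_mkf; cbv [pb_odd];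
  rewrite ?scale1r ?scommZl ?scommZr ?scalerA ?expr2 ?hs !scomm_mkf Phi_mkf !mkfE mkfS ?mkfZ mkfD;
  apply: mkf_eq16;
  cbv [ov addO mulO negO bl eqn andb Bool.eqb nat_of_ord Nat.pred addF negF scF unitF mulOF
       evenF PhiF ThF repF mulF scommF cocycle cocycle_raw pb_odd].

Lemma p_E1_E1 (F : fieldType) (l a b s : F) : l != 0 -> s * s = (a*b+1)^-1 -> a*b+1 != 0 -> (2:F) != 0 ->
  Pair l a b s E1 E1.
Proof. move=> hl hs hab h2.  (pairtac hs; field; by rewrite ?hl ?hab ?h2). Qed.
Lemma p_E1_F1 (F : fieldType) (l a b s : F) : l != 0 -> s * s = (a*b+1)^-1 -> a*b+1 != 0 -> (2:F) != 0 ->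
  Pair l a b s E1 F1.
Proof. move=> hl hs hab h2.  (pairtac hs; field; by rewrite ?hl ?hab ?h2). Qed.
Lemma p_E1_H1 (F : fieldType) (l a b s : F) : l != 0 -> s * s = (a*b+1)^-1 -> a*b+1 != 0 -> (2:F) != 0 ->
  Pair l a b s E1 H1.
Proof. move=> hl hs hab h2.  (pairtac hs; field; by rewrite ?hl ?hab ?h2). Qed.
Lemma p_E1_E2 (F : fieldType) (l a b s : F) : l != 0 -> s * s = (a*b+1)^-1 -> a*b+1 != 0 -> (2:F) != 0 ->
  Pair l a b s E1 E2.
Proof. move=> hl hs hab h2.  (pairtac hs; field; by rewrite ?hl ?hab ?h2). Qed.
Lemma p_E1_F2 (F : fieldType) (l a b s : F) : l != 0 -> s * s = (a*b+1)^-1 -> a*b+1 != 0 -> (2:F) != 0 ->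
  Pair l a b s E1 F2.
Proof. move=> hl hs hab h2.  (pairtac hs; field; by rewrite ?hl ?hab ?h2). Qed.
Lemma p_E1_H2 (F : fieldType) (l a b s : F) : l != 0 -> s * s = (a*b+1)^-1 -> a*b+1 != 0 -> (2:F) != 0 ->
  Pair l a b s E1 H2.
Proof. move=> hl hs hab h2.  (pairtac hs; field; by rewrite ?hl ?hab ?h2). Qed.
Lemma p_E1_B11 (F : fieldType) (l a b s : F) : l != 0 -> s * s = (a*b+1)^-1 -> a*b+1 != 0 -> (2:F) != 0 ->
  Pair l a b s E1 B11.
Proof. move=> hl hs hab h2.  (pairtac hs; field; by rewrite ?hl ?hab ?h2). Qed.
Lemma p_E1_B12 (F : fieldType) (l a b s : F) : l != 0 -> s * s = (a*b+1)^-1 -> a*b+1 != 0 -> (2:F) != 0 ->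
  Pair l a b s E1 B12.
Proof. move=> hl hs hab h2.  (pairtac hs; field; by rewrite ?hl ?hab ?h2). Qed.
Lemma p_E1_B21 (F : fieldType) (l a b s : F) : l != 0 -> s * s = (a*b+1)^-1 -> a*b+1 != 0 -> (2:F) != 0 ->
  Pair l a b s E1 B21.
Proof. move=> hl hs hab h2.  (pairtac hs; field; by rewrite ?hl ?hab ?h2). Qed.
Lemma p_E1_B22 (F : fieldType) (l a b s : F) : l != 0 -> s * s = (a*b+1)^-1 -> a*b+1 != 0 -> (2:F) != 0 ->
  Pair l a b s E1 B22.
Proof. move=> hl hs hab h2.  (pairtac hs; field; by rewrite ?hl ?hab ?h2). Qed.
Lemma p_E1_C11 (F : fieldType) (l a b s : F) : l != 0 -> s * s = (a*b+1)^-1 -> a*b+1 != 0 -> (2:F) != 0 ->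
  Pair l a b s E1 C11.
Proof. move=> hl hs hab h2.  (pairtac hs; field; by rewrite ?hl ?hab ?h2). Qed.
Lemma p_E1_C12 (F : fieldType) (l a b s : F) : l != 0 -> s * s = (a*b+1)^-1 -> a*b+1 != 0 -> (2:F) != 0 ->
  Pair l a b s E1 C12.
Proof. move=> hl hs hab h2.  (pairtac hs; field; by rewrite ?hl ?hab ?h2). Qed.
Lemma p_E1_C21 (F : fieldType) (l a b s : F) : l != 0 -> s * s = (a*b+1)^-1 -> a*b+1 != 0 -> (2:F) != 0 ->
  Pair l a b s E1 C21.
Proof. move=> hl hs hab h2.  (pairtac hs; field; by rewrite ?hl ?hab ?h2). Qed.
Lemma p_E1_C22 (F : fieldType) (l a b s : F) : l != 0 -> s * s = (a*b+1)^-1 -> a*b+1 != 0 -> (2:F) != 0 ->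
  Pair l a b s E1 C22.
Proof. move=> hl hs hab h2.  (pairtac hs; field; by rewrite ?hl ?hab ?h2). Qed.
Lemma p_F1_E1 (F : fieldType) (l a b s : F) : l != 0 -> s * s = (a*b+1)^-1 -> a*b+1 != 0 -> (2:F) != 0 ->
  Pair l a b s F1 E1.
Proof. move=> hl hs hab h2.  (pairtac hs; field; by rewrite ?hl ?hab ?h2). Qed.
Lemma p_F1_F1 (F : fieldType) (l a b s : F) : l != 0 -> s * s = (a*b+1)^-1 -> a*b+1 != 0 -> (2:F) != 0 ->
  Pair l a b s F1 F1.
Proof. move=> hl hs hab h2.  (pairtac hs; field; by rewrite ?hl ?hab ?h2). Qed.
Lemma p_F1_H1 (F : fieldType) (l a b s : F) : l != 0 -> s * s = (a*b+1)^-1 -> a*b+1 != 0 -> (2:F) != 0 ->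
  Pair l a b s F1 H1.
Proof. move=> hl hs hab h2.  (pairtac hs; field; by rewrite ?hl ?hab ?h2). Qed.
Lemma p_F1_E2 (F : fieldType) (l a b s : F) : l != 0 -> s * s = (a*b+1)^-1 -> a*b+1 != 0 -> (2:F) != 0 ->
  Pair l a b s F1 E2.
Proof. move=> hl hs hab h2.  (pairtac hs; field; by rewrite ?hl ?hab ?h2). Qed.
Lemma p_F1_F2 (F : fieldType) (l a b s : F) : l != 0 -> s * s = (a*b+1)^-1 -> a*b+1 != 0 -> (2:F) != 0 ->
  Pair l a b s F1 F2.
Proof. move=> hl hs hab h2.  (pairtac hs; field; by rewrite ?hl ?hab ?h2). Qed.
Lemma p_F1_H2 (F : fieldType) (l a b s : F) : l != 0 -> s * s = (a*b+1)^-1 -> a*b+1 != 0 -> (2:F) != 0 ->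
  Pair l a b s F1 H2.
Proof. move=> hl hs hab h2.  (pairtac hs; field; by rewrite ?hl ?hab ?h2). Qed.
Lemma p_F1_B11 (F : fieldType) (l a b s : F) : l != 0 -> s * s = (a*b+1)^-1 -> a*b+1 != 0 -> (2:F) != 0 ->
  Pair l a b s F1 B11.
Proof. move=> hl hs hab h2.  (pairtac hs; field; by rewrite ?hl ?hab ?h2). Qed.
Lemma p_F1_B12 (F : fieldType) (l a b s : F) : l != 0 -> s * s = (a*b+1)^-1 -> a*b+1 != 0 -> (2:F) != 0 ->
  Pair l a b s F1 B12.
Proof. move=> hl hs hab h2.  (pairtac hs; field; by rewrite ?hl ?hab ?h2). Qed.
Lemma p_F1_B21 (F : fieldType) (l a b s : F) : l != 0 -> s * s = (a*b+1)^-1 -> a*b+1 != 0 -> (2:F) != 0 ->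
  Pair l a b s F1 B21.
Proof. move=> hl hs hab h2.  (pairtac hs; field; by rewrite ?hl ?hab ?h2). Qed.
Lemma p_F1_B22 (F : fieldType) (l a b s : F) : l != 0 -> s * s = (a*b+1)^-1 -> a*b+1 != 0 -> (2:F) != 0 ->
  Pair l a b s F1 B22.
Proof. move=> hl hs hab h2.  (pairtac hs; field; by rewrite ?hl ?hab ?h2). Qed.
Lemma p_F1_C11 (F : fieldType) (l a b s : F) : l != 0 -> s * s = (a*b+1)^-1 -> a*b+1 != 0 -> (2:F) != 0 ->
  Pair l a b s F1 C11.
Proof. move=> hl hs hab h2.  (pairtac hs; field; by rewrite ?hl ?hab ?h2). Qed.
Lemma p_F1_C12 (F : fieldType) (l a b s : F) : l != 0 -> s * s = (a*b+1)^-1 -> a*b+1 != 0 -> (2:F) != 0 ->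
  Pair l a b s F1 C12.
Proof. move=> hl hs hab h2.  (pairtac hs; field; by rewrite ?hl ?hab ?h2). Qed.
Lemma p_F1_C21 (F : fieldType) (l a b s : F) : l != 0 -> s * s = (a*b+1)^-1 -> a*b+1 != 0 -> (2:F) != 0 ->
  Pair l a b s F1 C21.
Proof. move=> hl hs hab h2.  (pairtac hs; field; by rewrite ?hl ?hab ?h2). Qed.
Lemma p_F1_C22 (F : fieldType) (l a b s : F) : l != 0 -> s * s = (a*b+1)^-1 -> a*b+1 != 0 -> (2:F) != 0 ->
  Pair l a b s F1 C22.
Proof. move=> hl hs hab h2.  (pairtac hs; field; by rewrite ?hl ?hab ?h2). Qed.
Lemma p_H1_E1 (F : fieldType) (l a b s : F) : l != 0 -> s * s = (a*b+1)^-1 -> a*b+1 != 0 -> (2:F) != 0 ->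
  Pair l a b s H1 E1.
Proof. move=> hl hs hab h2.  (pairtac hs; field; by rewrite ?hl ?hab ?h2). Qed.
Lemma p_H1_F1 (F : fieldType) (l a b s : F) : l != 0 -> s * s = (a*b+1)^-1 -> a*b+1 != 0 -> (2:F) != 0 ->
  Pair l a b s H1 F1.
Proof. move=> hl hs hab h2.  (pairtac hs; field; by rewrite ?hl ?hab ?h2). Qed.
Lemma p_H1_H1 (F : fieldType) (l a b s : F) : l != 0 -> s * s = (a*b+1)^-1 -> a*b+1 != 0 -> (2:F) != 0 ->
  Pair l a b s H1 H1.
Proof. move=> hl hs hab h2.  (pairtac hs; field; by rewrite ?hl ?hab ?h2). Qed.
Lemma p_H1_E2 (F : fieldType) (l a b s : F) : l != 0 -> s * s = (a*b+1)^-1 -> a*b+1 != 0 -> (2:F) != 0 ->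
  Pair l a b s H1 E2.
Proof. move=> hl hs hab h2.  (pairtac hs; field; by rewrite ?hl ?hab ?h2). Qed.
Lemma p_H1_F2 (F : fieldType) (l a b s : F) : l != 0 -> s * s = (a*b+1)^-1 -> a*b+1 != 0 -> (2:F) != 0 ->
  Pair l a b s H1 F2.
Proof. move=> hl hs hab h2.  (pairtac hs; field; by rewrite ?hl ?hab ?h2). Qed.
Lemma p_H1_H2 (F : fieldType) (l a b s : F) : l != 0 -> s * s = (a*b+1)^-1 -> a*b+1 != 0 -> (2:F) != 0 ->
  Pair l a b s H1 H2.
Proof. move=> hl hs hab h2.  (pairtac hs; field; by rewrite ?hl ?hab ?h2). Qed.
Lemma p_H1_B11 (F : fieldType) (l a b s : F) : l != 0 -> s * s = (a*b+1)^-1 -> a*b+1 != 0 -> (2:F) != 0 ->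
  Pair l a b s H1 B11.
Proof. move=> hl hs hab h2.  (pairtac hs; field; by rewrite ?hl ?hab ?h2). Qed.
Lemma p_H1_B12 (F : fieldType) (l a b s : F) : l != 0 -> s * s = (a*b+1)^-1 -> a*b+1 != 0 -> (2:F) != 0 ->
  Pair l a b s H1 B12.
Proof. move=> hl hs hab h2.  (pairtac hs; field; by rewrite ?hl ?hab ?h2). Qed.
Lemma p_H1_B21 (F : fieldType) (l a b s : F) : l != 0 -> s * s = (a*b+1)^-1 -> a*b+1 != 0 -> (2:F) != 0 ->
  Pair l a b s H1 B21.
Proof. move=> hl hs hab h2.  (pairtac hs; field; by rewrite ?hl ?hab ?h2). Qed.
Lemma p_H1_B22 (F : fieldType) (l a b s : F) : l != 0 -> s * s = (a*b+1)^-1 -> a*b+1 != 0 -> (2:F) != 0 ->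
  Pair l a b s H1 B22.
Proof. move=> hl hs hab h2.  (pairtac hs; field; by rewrite ?hl ?hab ?h2). Qed.
Lemma p_H1_C11 (F : fieldType) (l a b s : F) : l != 0 -> s * s = (a*b+1)^-1 -> a*b+1 != 0 -> (2:F) != 0 ->
  Pair l a b s H1 C11.
Proof. move=> hl hs hab h2.  (pairtac hs; field; by rewrite ?hl ?hab ?h2). Qed.
Lemma p_H1_C12 (F : fieldType) (l a b s : F) : l != 0 -> s * s = (a*b+1)^-1 -> a*b+1 != 0 -> (2:F) != 0 ->
  Pair l a b s H1 C12.
Proof. move=> hl hs hab h2.  (pairtac hs; field; by rewrite ?hl ?hab ?h2). Qed.
Lemma p_H1_C21 (F : fieldType) (l a b s : F) : l != 0 -> s * s = (a*b+1)^-1 -> a*b+1 != 0 -> (2:F) != 0 ->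
  Pair l a b s H1 C21.
Proof. move=> hl hs hab h2.  (pairtac hs; field; by rewrite ?hl ?hab ?h2). Qed.
Lemma p_H1_C22 (F : fieldType) (l a b s : F) : l != 0 -> s * s = (a*b+1)^-1 -> a*b+1 != 0 -> (2:F) != 0 ->
  Pair l a b s H1 C22.
Proof. move=> hl hs hab h2.  (pairtac hs; field; by rewrite ?hl ?hab ?h2). Qed.
Lemma p_E2_E1 (F : fieldType) (l a b s : F) : l != 0 -> s * s = (a*b+1)^-1 -> a*b+1 != 0 -> (2:F) != 0 ->
  Pair l a b s E2 E1.
Proof. move=> hl hs hab h2.  (pairtac hs; field; by rewrite ?hl ?hab ?h2). Qed.
Lemma p_E2_F1 (F : fieldType) (l a b s : F) : l != 0 -> s * s = (a*b+1)^-1 -> a*b+1 != 0 -> (2:F) != 0 ->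
  Pair l a b s E2 F1.
Proof. move=> hl hs hab h2.  (pairtac hs; field; by rewrite ?hl ?hab ?h2). Qed.
Lemma p_E2_H1 (F : fieldType) (l a b s : F) : l != 0 -> s * s = (a*b+1)^-1 -> a*b+1 != 0 -> (2:F) != 0 ->
  Pair l a b s E2 H1.
Proof. move=> hl hs hab h2.  (pairtac hs; field; by rewrite ?hl ?hab ?h2). Qed.
Lemma p_E2_E2 (F : fieldType) (l a b s : F) : l != 0 -> s * s = (a*b+1)^-1 -> a*b+1 != 0 -> (2:F) != 0 ->
  Pair l a b s E2 E2.
Proof. move=> hl hs hab h2.  (pairtac hs; field; by rewrite ?hl ?hab ?h2). Qed.
Lemma p_E2_F2 (F : fieldType) (l a b s : F) : l != 0 -> s * s = (a*b+1)^-1 -> a*b+1 != 0 -> (2:F) != 0 ->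
  Pair l a b s E2 F2.
Proof. move=> hl hs hab h2.  (pairtac hs; field; by rewrite ?hl ?hab ?h2). Qed.
Lemma p_E2_H2 (F : fieldType) (l a b s : F) : l != 0 -> s * s = (a*b+1)^-1 -> a*b+1 != 0 -> (2:F) != 0 ->
  Pair l a b s E2 H2.
Proof. move=> hl hs hab h2.  (pairtac hs; field; by rewrite ?hl ?hab ?h2). Qed.
Lemma p_E2_B11 (F : fieldType) (l a b s : F) : l != 0 -> s * s = (a*b+1)^-1 -> a*b+1 != 0 -> (2:F) != 0 ->
  Pair l a b s E2 B11.
Proof. move=> hl hs hab h2.  (pairtac hs; field; by rewrite ?hl ?hab ?h2). Qed.
Lemma p_E2_B12 (F : fieldType) (l a b s : F) : l != 0 -> s * s = (a*b+1)^-1 -> a*b+1 != 0 -> (2:F) != 0 ->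
  Pair l a b s E2 B12.
Proof. move=> hl hs hab h2.  (pairtac hs; field; by rewrite ?hl ?hab ?h2). Qed.
Lemma p_E2_B21 (F : fieldType) (l a b s : F) : l != 0 -> s * s = (a*b+1)^-1 -> a*b+1 != 0 -> (2:F) != 0 ->
  Pair l a b s E2 B21.
Proof. move=> hl hs hab h2.  (pairtac hs; field; by rewrite ?hl ?hab ?h2). Qed.
Lemma p_E2_B22 (F : fieldType) (l a b s : F) : l != 0 -> s * s = (a*b+1)^-1 -> a*b+1 != 0 -> (2:F) != 0 ->
  Pair l a b s E2 B22.
Proof. move=> hl hs hab h2.  (pairtac hs; field; by rewrite ?hl ?hab ?h2). Qed.
Lemma p_E2_C11 (F : fieldType) (l a b s : F) : l != 0 -> s * s = (a*b+1)^-1 -> a*b+1 != 0 -> (2:F) != 0 ->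
  Pair l a b s E2 C11.
Proof. move=> hl hs hab h2.  (pairtac hs; field; by rewrite ?hl ?hab ?h2). Qed.
Lemma p_E2_C12 (F : fieldType) (l a b s : F) : l != 0 -> s * s = (a*b+1)^-1 -> a*b+1 != 0 -> (2:F) != 0 ->
  Pair l a b s E2 C12.
Proof. move=> hl hs hab h2.  (pairtac hs; field; by rewrite ?hl ?hab ?h2). Qed.
Lemma p_E2_C21 (F : fieldType) (l a b s : F) : l != 0 -> s * s = (a*b+1)^-1 -> a*b+1 != 0 -> (2:F) != 0 ->
  Pair l a b s E2 C21.
Proof. move=> hl hs hab h2.  (pairtac hs; field; by rewrite ?hl ?hab ?h2). Qed.
Lemma p_E2_C22 (F : fieldType) (l a b s : F) : l != 0 -> s * s = (a*b+1)^-1 -> a*b+1 != 0 -> (2:F) != 0 ->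
  Pair l a b s E2 C22.
Proof. move=> hl hs hab h2.  (pairtac hs; field; by rewrite ?hl ?hab ?h2). Qed.
Lemma p_F2_E1 (F : fieldType) (l a b s : F) : l != 0 -> s * s = (a*b+1)^-1 -> a*b+1 != 0 -> (2:F) != 0 ->
  Pair l a b s F2 E1.
Proof. move=> hl hs hab h2.  (pairtac hs; field; by rewrite ?hl ?hab ?h2). Qed.
Lemma p_F2_F1 (F : fieldType) (l a b s : F) : l != 0 -> s * s = (a*b+1)^-1 -> a*b+1 != 0 -> (2:F) != 0 ->
  Pair l a b s F2 F1.
Proof. move=> hl hs hab h2.  (pairtac hs; field; by rewrite ?hl ?hab ?h2). Qed.
Lemma p_F2_H1 (F : fieldType) (l a b s : F) : l != 0 -> s * s = (a*b+1)^-1 -> a*b+1 != 0 -> (2:F) != 0 ->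
  Pair l a b s F2 H1.
Proof. move=> hl hs hab h2.  (pairtac hs; field; by rewrite ?hl ?hab ?h2). Qed.
Lemma p_F2_E2 (F : fieldType) (l a b s : F) : l != 0 -> s * s = (a*b+1)^-1 -> a*b+1 != 0 -> (2:F) != 0 ->
  Pair l a b s F2 E2.
Proof. move=> hl hs hab h2.  (pairtac hs; field; by rewrite ?hl ?hab ?h2). Qed.
Lemma p_F2_F2 (F : fieldType) (l a b s : F) : l != 0 -> s * s = (a*b+1)^-1 -> a*b+1 != 0 -> (2:F) != 0 ->
  Pair l a b s F2 F2.
Proof. move=> hl hs hab h2.  (pairtac hs; field; by rewrite ?hl ?hab ?h2). Qed.
Lemma p_F2_H2 (F : fieldType) (l a b s : F) : l != 0 -> s * s = (a*b+1)^-1 -> a*b+1 != 0 -> (2:F) != 0 ->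
  Pair l a b s F2 H2.
Proof. move=> hl hs hab h2.  (pairtac hs; field; by rewrite ?hl ?hab ?h2). Qed.
Lemma p_F2_B11 (F : fieldType) (l a b s : F) : l != 0 -> s * s = (a*b+1)^-1 -> a*b+1 != 0 -> (2:F) != 0 ->
  Pair l a b s F2 B11.
Proof. move=> hl hs hab h2.  (pairtac hs; field; by rewrite ?hl ?hab ?h2). Qed.
Lemma p_F2_B12 (F : fieldType) (l a b s : F) : l != 0 -> s * s = (a*b+1)^-1 -> a*b+1 != 0 -> (2:F) != 0 ->
  Pair l a b s F2 B12.
Proof. move=> hl hs hab h2.  (pairtac hs; field; by rewrite ?hl ?hab ?h2). Qed.
Lemma p_F2_B21 (F : fieldType) (l a b s : F) : l != 0 -> s * s = (a*b+1)^-1 -> a*b+1 != 0 -> (2:F) != 0 ->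
  Pair l a b s F2 B21.
Proof. move=> hl hs hab h2.  (pairtac hs; field; by rewrite ?hl ?hab ?h2). Qed.
Lemma p_F2_B22 (F : fieldType) (l a b s : F) : l != 0 -> s * s = (a*b+1)^-1 -> a*b+1 != 0 -> (2:F) != 0 ->
  Pair l a b s F2 B22.
Proof. move=> hl hs hab h2.  (pairtac hs; field; by rewrite ?hl ?hab ?h2). Qed.
Lemma p_F2_C11 (F : fieldType) (l a b s : F) : l != 0 -> s * s = (a*b+1)^-1 -> a*b+1 != 0 -> (2:F) != 0 ->
  Pair l a b s F2 C11.
Proof. move=> hl hs hab h2.  (pairtac hs; field; by rewrite ?hl ?hab ?h2). Qed.
Lemma p_F2_C12 (F : fieldType) (l a b s : F) : l != 0 -> s * s = (a*b+1)^-1 -> a*b+1 != 0 -> (2:F) != 0 ->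
  Pair l a b s F2 C12.
Proof. move=> hl hs hab h2.  (pairtac hs; field; by rewrite ?hl ?hab ?h2). Qed.
Lemma p_F2_C21 (F : fieldType) (l a b s : F) : l != 0 -> s * s = (a*b+1)^-1 -> a*b+1 != 0 -> (2:F) != 0 ->
  Pair l a b s F2 C21.
Proof. move=> hl hs hab h2.  (pairtac hs; field; by rewrite ?hl ?hab ?h2). Qed.
Lemma p_F2_C22 (F : fieldType) (l a b s : F) : l != 0 -> s * s = (a*b+1)^-1 -> a*b+1 != 0 -> (2:F) != 0 ->
  Pair l a b s F2 C22.
Proof. move=> hl hs hab h2.  (pairtac hs; field; by rewrite ?hl ?hab ?h2). Qed.
Lemma p_H2_E1 (F : fieldType) (l a b s : F) : l != 0 -> s * s = (a*b+1)^-1 -> a*b+1 != 0 -> (2:F) != 0 ->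
  Pair l a b s H2 E1.
Proof. move=> hl hs hab h2.  (pairtac hs; field; by rewrite ?hl ?hab ?h2). Qed.
Lemma p_H2_F1 (F : fieldType) (l a b s : F) : l != 0 -> s * s = (a*b+1)^-1 -> a*b+1 != 0 -> (2:F) != 0 ->
  Pair l a b s H2 F1.
Proof. move=> hl hs hab h2.  (pairtac hs; field; by rewrite ?hl ?hab ?h2). Qed.
Lemma p_H2_H1 (F : fieldType) (l a b s : F) : l != 0 -> s * s = (a*b+1)^-1 -> a*b+1 != 0 -> (2:F) != 0 ->
  Pair l a b s H2 H1.
Proof. move=> hl hs hab h2.  (pairtac hs; field; by rewrite ?hl ?hab ?h2). Qed.
Lemma p_H2_E2 (F : fieldType) (l a b s : F) : l != 0 -> s * s = (a*b+1)^-1 -> a*b+1 != 0 -> (2:F) != 0 ->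
  Pair l a b s H2 E2.
Proof. move=> hl hs hab h2.  (pairtac hs; field; by rewrite ?hl ?hab ?h2). Qed.
Lemma p_H2_F2 (F : fieldType) (l a b s : F) : l != 0 -> s * s = (a*b+1)^-1 -> a*b+1 != 0 -> (2:F) != 0 ->
  Pair l a b s H2 F2.
Proof. move=> hl hs hab h2.  (pairtac hs; field; by rewrite ?hl ?hab ?h2). Qed.
Lemma p_H2_H2 (F : fieldType) (l a b s : F) : l != 0 -> s * s = (a*b+1)^-1 -> a*b+1 != 0 -> (2:F) != 0 ->
  Pair l a b s H2 H2.
Proof. move=> hl hs hab h2.  (pairtac hs; field; by rewrite ?hl ?hab ?h2). Qed.
Lemma p_H2_B11 (F : fieldType) (l a b s : F) : l != 0 -> s * s = (a*b+1)^-1 -> a*b+1 != 0 -> (2:F) != 0 ->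
  Pair l a b s H2 B11.
Proof. move=> hl hs hab h2.  (pairtac hs; field; by rewrite ?hl ?hab ?h2). Qed.
Lemma p_H2_B12 (F : fieldType) (l a b s : F) : l != 0 -> s * s = (a*b+1)^-1 -> a*b+1 != 0 -> (2:F) != 0 ->
  Pair l a b s H2 B12.
Proof. move=> hl hs hab h2.  (pairtac hs; field; by rewrite ?hl ?hab ?h2). Qed.
Lemma p_H2_B21 (F : fieldType) (l a b s : F) : l != 0 -> s * s = (a*b+1)^-1 -> a*b+1 != 0 -> (2:F) != 0 ->
  Pair l a b s H2 B21.
Proof. move=> hl hs hab h2.  (pairtac hs; field; by rewrite ?hl ?hab ?h2). Qed.
Lemma p_H2_B22 (F : fieldType) (l a b s : F) : l != 0 -> s * s = (a*b+1)^-1 -> a*b+1 != 0 -> (2:F) != 0 ->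
  Pair l a b s H2 B22.
Proof. move=> hl hs hab h2.  (pairtac hs; field; by rewrite ?hl ?hab ?h2). Qed.
Lemma p_H2_C11 (F : fieldType) (l a b s : F) : l != 0 -> s * s = (a*b+1)^-1 -> a*b+1 != 0 -> (2:F) != 0 ->
  Pair l a b s H2 C11.
Proof. move=> hl hs hab h2.  (pairtac hs; field; by rewrite ?hl ?hab ?h2). Qed.
Lemma p_H2_C12 (F : fieldType) (l a b s : F) : l != 0 -> s * s = (a*b+1)^-1 -> a*b+1 != 0 -> (2:F) != 0 ->
  Pair l a b s H2 C12.
Proof. move=> hl hs hab h2.  (pairtac hs; field; by rewrite ?hl ?hab ?h2). Qed.
Lemma p_H2_C21 (F : fieldType) (l a b s : F) : l != 0 -> s * s = (a*b+1)^-1 -> a*b+1 != 0 -> (2:F) != 0 ->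
  Pair l a b s H2 C21.
Proof. move=> hl hs hab h2.  (pairtac hs; field; by rewrite ?hl ?hab ?h2). Qed.
Lemma p_H2_C22 (F : fieldType) (l a b s : F) : l != 0 -> s * s = (a*b+1)^-1 -> a*b+1 != 0 -> (2:F) != 0 ->
  Pair l a b s H2 C22.
Proof. move=> hl hs hab h2.  (pairtac hs; field; by rewrite ?hl ?hab ?h2). Qed.
Lemma p_B11_E1 (F : fieldType) (l a b s : F) : l != 0 -> s * s = (a*b+1)^-1 -> a*b+1 != 0 -> (2:F) != 0 ->
  Pair l a b s B11 E1.
Proof. move=> hl hs hab h2.  (pairtac hs; field; by rewrite ?hl ?hab ?h2). Qed.
Lemma p_B11_F1 (F : fieldType) (l a b s : F) : l != 0 -> s * s = (a*b+1)^-1 -> a*b+1 != 0 -> (2:F) != 0 ->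
  Pair l a b s B11 F1.
Proof. move=> hl hs hab h2.  (pairtac hs; field; by rewrite ?hl ?hab ?h2). Qed.
Lemma p_B11_H1 (F : fieldType) (l a b s : F) : l != 0 -> s * s = (a*b+1)^-1 -> a*b+1 != 0 -> (2:F) != 0 ->
  Pair l a b s B11 H1.
Proof. move=> hl hs hab h2.  (pairtac hs; field; by rewrite ?hl ?hab ?h2). Qed.
Lemma p_B11_E2 (F : fieldType) (l a b s : F) : l != 0 -> s * s = (a*b+1)^-1 -> a*b+1 != 0 -> (2:F) != 0 ->
  Pair l a b s B11 E2.
Proof. move=> hl hs hab h2.  (pairtac hs; field; by rewrite ?hl ?hab ?h2). Qed.
Lemma p_B11_F2 (F : fieldType) (l a b s : F) : l != 0 -> s * s = (a*b+1)^-1 -> a*b+1 != 0 -> (2:F) != 0 ->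
  Pair l a b s B11 F2.
Proof. move=> hl hs hab h2.  (pairtac hs; field; by rewrite ?hl ?hab ?h2). Qed.
Lemma p_B11_H2 (F : fieldType) (l a b s : F) : l != 0 -> s * s = (a*b+1)^-1 -> a*b+1 != 0 -> (2:F) != 0 ->
  Pair l a b s B11 H2.
Proof. move=> hl hs hab h2.  (pairtac hs; field; by rewrite ?hl ?hab ?h2). Qed.
Lemma p_B11_B11 (F : fieldType) (l a b s : F) : l != 0 -> s * s = (a*b+1)^-1 -> a*b+1 != 0 -> (2:F) != 0 ->
  Pair l a b s B11 B11.
Proof. move=> hl hs hab h2.  (pairtac hs; field; by rewrite ?hl ?hab ?h2). Qed.
Lemma p_B11_B12 (F : fieldType) (l a b s : F) : l != 0 -> s * s = (a*b+1)^-1 -> a*b+1 != 0 -> (2:F) != 0 ->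
  Pair l a b s B11 B12.
Proof. move=> hl hs hab h2.  (pairtac hs; field; by rewrite ?hl ?hab ?h2). Qed.
Lemma p_B11_B21 (F : fieldType) (l a b s : F) : l != 0 -> s * s = (a*b+1)^-1 -> a*b+1 != 0 -> (2:F) != 0 ->
  Pair l a b s B11 B21.
Proof. move=> hl hs hab h2.  (pairtac hs; field; by rewrite ?hl ?hab ?h2). Qed.
Lemma p_B11_B22 (F : fieldType) (l a b s : F) : l != 0 -> s * s = (a*b+1)^-1 -> a*b+1 != 0 -> (2:F) != 0 ->
  Pair l a b s B11 B22.
Proof. move=> hl hs hab h2.  (pairtac hs; field; by rewrite ?hl ?hab ?h2). Qed.
Lemma p_B11_C11 (F : fieldType) (l a b s : F) : l != 0 -> s * s = (a*b+1)^-1 -> a*b+1 != 0 -> (2:F) != 0 ->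
  Pair l a b s B11 C11.
Proof. move=> hl hs hab h2.  (pairtac hs; field; by rewrite ?hl ?hab ?h2). Qed.
Lemma p_B11_C12 (F : fieldType) (l a b s : F) : l != 0 -> s * s = (a*b+1)^-1 -> a*b+1 != 0 -> (2:F) != 0 ->
  Pair l a b s B11 C12.
Proof. move=> hl hs hab h2.  (pairtac hs; field; by rewrite ?hl ?hab ?h2). Qed.
Lemma p_B11_C21 (F : fieldType) (l a b s : F) : l != 0 -> s * s = (a*b+1)^-1 -> a*b+1 != 0 -> (2:F) != 0 ->
  Pair l a b s B11 C21.
Proof. move=> hl hs hab h2.  (pairtac hs; field; by rewrite ?hl ?hab ?h2). Qed.
Lemma p_B11_C22 (F : fieldType) (l a b s : F) : l != 0 -> s * s = (a*b+1)^-1 -> a*b+1 != 0 -> (2:F) != 0 ->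
  Pair l a b s B11 C22.
Proof. move=> hl hs hab h2.  (pairtac hs; field; by rewrite ?hl ?hab ?h2). Qed.
Lemma p_B12_E1 (F : fieldType) (l a b s : F) : l != 0 -> s * s = (a*b+1)^-1 -> a*b+1 != 0 -> (2:F) != 0 ->
  Pair l a b s B12 E1.
Proof. move=> hl hs hab h2.  (pairtac hs; field; by rewrite ?hl ?hab ?h2). Qed.
Lemma p_B12_F1 (F : fieldType) (l a b s : F) : l != 0 -> s * s = (a*b+1)^-1 -> a*b+1 != 0 -> (2:F) != 0 ->
  Pair l a b s B12 F1.
Proof. move=> hl hs hab h2.  (pairtac hs; field; by rewrite ?hl ?hab ?h2). Qed.
Lemma p_B12_H1 (F : fieldType) (l a b s : F) : l != 0 -> s * s = (a*b+1)^-1 -> a*b+1 != 0 -> (2:F) != 0 ->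
  Pair l a b s B12 H1.
Proof. move=> hl hs hab h2.  (pairtac hs; field; by rewrite ?hl ?hab ?h2). Qed.
Lemma p_B12_E2 (F : fieldType) (l a b s : F) : l != 0 -> s * s = (a*b+1)^-1 -> a*b+1 != 0 -> (2:F) != 0 ->
  Pair l a b s B12 E2.
Proof. move=> hl hs hab h2.  (pairtac hs; field; by rewrite ?hl ?hab ?h2). Qed.
Lemma p_B12_F2 (F : fieldType) (l a b s : F) : l != 0 -> s * s = (a*b+1)^-1 -> a*b+1 != 0 -> (2:F) != 0 ->
  Pair l a b s B12 F2.
Proof. move=> hl hs hab h2.  (pairtac hs; field; by rewrite ?hl ?hab ?h2). Qed.
Lemma p_B12_H2 (F : fieldType) (l a b s : F) : l != 0 -> s * s = (a*b+1)^-1 -> a*b+1 != 0 -> (2:F) != 0 ->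
  Pair l a b s B12 H2.
Proof. move=> hl hs hab h2.  (pairtac hs; field; by rewrite ?hl ?hab ?h2). Qed.
Lemma p_B12_B11 (F : fieldType) (l a b s : F) : l != 0 -> s * s = (a*b+1)^-1 -> a*b+1 != 0 -> (2:F) != 0 ->
  Pair l a b s B12 B11.
Proof. move=> hl hs hab h2.  (pairtac hs; field; by rewrite ?hl ?hab ?h2). Qed.
Lemma p_B12_B12 (F : fieldType) (l a b s : F) : l != 0 -> s * s = (a*b+1)^-1 -> a*b+1 != 0 -> (2:F) != 0 ->
  Pair l a b s B12 B12.
Proof. move=> hl hs hab h2.  (pairtac hs; field; by rewrite ?hl ?hab ?h2). Qed.
Lemma p_B12_B21 (F : fieldType) (l a b s : F) : l != 0 -> s * s = (a*b+1)^-1 -> a*b+1 != 0 -> (2:F) != 0 ->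
  Pair l a b s B12 B21.
Proof. move=> hl hs hab h2.  (pairtac hs; field; by rewrite ?hl ?hab ?h2). Qed.
Lemma p_B12_B22 (F : fieldType) (l a b s : F) : l != 0 -> s * s = (a*b+1)^-1 -> a*b+1 != 0 -> (2:F) != 0 ->
  Pair l a b s B12 B22.
Proof. move=> hl hs hab h2.  (pairtac hs; field; by rewrite ?hl ?hab ?h2). Qed.
Lemma p_B12_C11 (F : fieldType) (l a b s : F) : l != 0 -> s * s = (a*b+1)^-1 -> a*b+1 != 0 -> (2:F) != 0 ->
  Pair l a b s B12 C11.
Proof. move=> hl hs hab h2.  (pairtac hs; field; by rewrite ?hl ?hab ?h2). Qed.
Lemma p_B12_C12 (F : fieldType) (l a b s : F) : l != 0 -> s * s = (a*b+1)^-1 -> a*b+1 != 0 -> (2:F) != 0 ->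
  Pair l a b s B12 C12.
Proof. move=> hl hs hab h2.  (pairtac hs; field; by rewrite ?hl ?hab ?h2). Qed.
Lemma p_B12_C21 (F : fieldType) (l a b s : F) : l != 0 -> s * s = (a*b+1)^-1 -> a*b+1 != 0 -> (2:F) != 0 ->
  Pair l a b s B12 C21.
Proof. move=> hl hs hab h2.  (pairtac hs; field; by rewrite ?hl ?hab ?h2). Qed.
Lemma p_B12_C22 (F : fieldType) (l a b s : F) : l != 0 -> s * s = (a*b+1)^-1 -> a*b+1 != 0 -> (2:F) != 0 ->
  Pair l a b s B12 C22.
Proof. move=> hl hs hab h2.  (pairtac hs; field; by rewrite ?hl ?hab ?h2). Qed.
Lemma p_B21_E1 (F : fieldType) (l a b s : F) : l != 0 -> s * s = (a*b+1)^-1 -> a*b+1 != 0 -> (2:F) != 0 ->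
  Pair l a b s B21 E1.
Proof. move=> hl hs hab h2.  (pairtac hs; field; by rewrite ?hl ?hab ?h2). Qed.
Lemma p_B21_F1 (F : fieldType) (l a b s : F) : l != 0 -> s * s = (a*b+1)^-1 -> a*b+1 != 0 -> (2:F) != 0 ->
  Pair l a b s B21 F1.
Proof. move=> hl hs hab h2.  (pairtac hs; field; by rewrite ?hl ?hab ?h2). Qed.
Lemma p_B21_H1 (F : fieldType) (l a b s : F) : l != 0 -> s * s = (a*b+1)^-1 -> a*b+1 != 0 -> (2:F) != 0 ->
  Pair l a b s B21 H1.
Proof. move=> hl hs hab h2.  (pairtac hs; field; by rewrite ?hl ?hab ?h2). Qed.
Lemma p_B21_E2 (F : fieldType) (l a b s : F) : l != 0 -> s * s = (a*b+1)^-1 -> a*b+1 != 0 -> (2:F) != 0 ->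
  Pair l a b s B21 E2.
Proof. move=> hl hs hab h2.  (pairtac hs; field; by rewrite ?hl ?hab ?h2). Qed.
Lemma p_B21_F2 (F : fieldType) (l a b s : F) : l != 0 -> s * s = (a*b+1)^-1 -> a*b+1 != 0 -> (2:F) != 0 ->
  Pair l a b s B21 F2.
Proof. move=> hl hs hab h2.  (pairtac hs; field; by rewrite ?hl ?hab ?h2). Qed.
Lemma p_B21_H2 (F : fieldType) (l a b s : F) : l != 0 -> s * s = (a*b+1)^-1 -> a*b+1 != 0 -> (2:F) != 0 ->
  Pair l a b s B21 H2.
Proof. move=> hl hs hab h2.  (pairtac hs; field; by rewrite ?hl ?hab ?h2). Qed.
Lemma p_B21_B11 (F : fieldType) (l a b s : F) : l != 0 -> s * s = (a*b+1)^-1 -> a*b+1 != 0 -> (2:F) != 0 ->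
  Pair l a b s B21 B11.
Proof. move=> hl hs hab h2.  (pairtac hs; field; by rewrite ?hl ?hab ?h2). Qed.
Lemma p_B21_B12 (F : fieldType) (l a b s : F) : l != 0 -> s * s = (a*b+1)^-1 -> a*b+1 != 0 -> (2:F) != 0 ->
  Pair l a b s B21 B12.
Proof. move=> hl hs hab h2.  (pairtac hs; field; by rewrite ?hl ?hab ?h2). Qed.
Lemma p_B21_B21 (F : fieldType) (l a b s : F) : l != 0 -> s * s = (a*b+1)^-1 -> a*b+1 != 0 -> (2:F) != 0 ->
  Pair l a b s B21 B21.
Proof. move=> hl hs hab h2.  (pairtac hs; field; by rewrite ?hl ?hab ?h2). Qed.
Lemma p_B21_B22 (F : fieldType) (l a b s : F) : l != 0 -> s * s = (a*b+1)^-1 -> a*b+1 != 0 -> (2:F) != 0 ->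
  Pair l a b s B21 B22.
Proof. move=> hl hs hab h2.  (pairtac hs; field; by rewrite ?hl ?hab ?h2). Qed.
Lemma p_B21_C11 (F : fieldType) (l a b s : F) : l != 0 -> s * s = (a*b+1)^-1 -> a*b+1 != 0 -> (2:F) != 0 ->
  Pair l a b s B21 C11.
Proof. move=> hl hs hab h2.  (pairtac hs; field; by rewrite ?hl ?hab ?h2). Qed.
Lemma p_B21_C12 (F : fieldType) (l a b s : F) : l != 0 -> s * s = (a*b+1)^-1 -> a*b+1 != 0 -> (2:F) != 0 ->
  Pair l a b s B21 C12.
Proof. move=> hl hs hab h2.  (pairtac hs; field; by rewrite ?hl ?hab ?h2). Qed.
Lemma p_B21_C21 (F : fieldType) (l a b s : F) : l != 0 -> s * s = (a*b+1)^-1 -> a*b+1 != 0 -> (2:F) != 0 ->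
  Pair l a b s B21 C21.
Proof. move=> hl hs hab h2.  (pairtac hs; field; by rewrite ?hl ?hab ?h2). Qed.
Lemma p_B21_C22 (F : fieldType) (l a b s : F) : l != 0 -> s * s = (a*b+1)^-1 -> a*b+1 != 0 -> (2:F) != 0 ->
  Pair l a b s B21 C22.
Proof. move=> hl hs hab h2.  (pairtac hs; field; by rewrite ?hl ?hab ?h2). Qed.
Lemma p_B22_E1 (F : fieldType) (l a b s : F) : l != 0 -> s * s = (a*b+1)^-1 -> a*b+1 != 0 -> (2:F) != 0 ->
  Pair l a b s B22 E1.
Proof. move=> hl hs hab h2.  (pairtac hs; field; by rewrite ?hl ?hab ?h2). Qed.
Lemma p_B22_F1 (F : fieldType) (l a b s : F) : l != 0 -> s * s = (a*b+1)^-1 -> a*b+1 != 0 -> (2:F) != 0 ->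
  Pair l a b s B22 F1.
Proof. move=> hl hs hab h2.  (pairtac hs; field; by rewrite ?hl ?hab ?h2). Qed.
Lemma p_B22_H1 (F : fieldType) (l a b s : F) : l != 0 -> s * s = (a*b+1)^-1 -> a*b+1 != 0 -> (2:F) != 0 ->
  Pair l a b s B22 H1.
Proof. move=> hl hs hab h2.  (pairtac hs; field; by rewrite ?hl ?hab ?h2). Qed.
Lemma p_B22_E2 (F : fieldType) (l a b s : F) : l != 0 -> s * s = (a*b+1)^-1 -> a*b+1 != 0 -> (2:F) != 0 ->
  Pair l a b s B22 E2.
Proof. move=> hl hs hab h2.  (pairtac hs; field; by rewrite ?hl ?hab ?h2). Qed.
Lemma p_B22_F2 (F : fieldType) (l a b s : F) : l != 0 -> s * s = (a*b+1)^-1 -> a*b+1 != 0 -> (2:F) != 0 ->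
  Pair l a b s B22 F2.
Proof. move=> hl hs hab h2.  (pairtac hs; field; by rewrite ?hl ?hab ?h2). Qed.
Lemma p_B22_H2 (F : fieldType) (l a b s : F) : l != 0 -> s * s = (a*b+1)^-1 -> a*b+1 != 0 -> (2:F) != 0 ->
  Pair l a b s B22 H2.
Proof. move=> hl hs hab h2.  (pairtac hs; field; by rewrite ?hl ?hab ?h2). Qed.
Lemma p_B22_B11 (F : fieldType) (l a b s : F) : l != 0 -> s * s = (a*b+1)^-1 -> a*b+1 != 0 -> (2:F) != 0 ->
  Pair l a b s B22 B11.
Proof. move=> hl hs hab h2.  (pairtac hs; field; by rewrite ?hl ?hab ?h2). Qed.
Lemma p_B22_B12 (F : fieldType) (l a b s : F) : l != 0 -> s * s = (a*b+1)^-1 -> a*b+1 != 0 -> (2:F) != 0 ->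
  Pair l a b s B22 B12.
Proof. move=> hl hs hab h2.  (pairtac hs; field; by rewrite ?hl ?hab ?h2). Qed.
Lemma p_B22_B21 (F : fieldType) (l a b s : F) : l != 0 -> s * s = (a*b+1)^-1 -> a*b+1 != 0 -> (2:F) != 0 ->
  Pair l a b s B22 B21.
Proof. move=> hl hs hab h2.  (pairtac hs; field; by rewrite ?hl ?hab ?h2). Qed.
Lemma p_B22_B22 (F : fieldType) (l a b s : F) : l != 0 -> s * s = (a*b+1)^-1 -> a*b+1 != 0 -> (2:F) != 0 ->
  Pair l a b s B22 B22.
Proof. move=> hl hs hab h2.  (pairtac hs; field; by rewrite ?hl ?hab ?h2). Qed.
Lemma p_B22_C11 (F : fieldType) (l a b s : F) : l != 0 -> s * s = (a*b+1)^-1 -> a*b+1 != 0 -> (2:F) != 0 ->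
  Pair l a b s B22 C11.
Proof. move=> hl hs hab h2.  (pairtac hs; field; by rewrite ?hl ?hab ?h2). Qed.
Lemma p_B22_C12 (F : fieldType) (l a b s : F) : l != 0 -> s * s = (a*b+1)^-1 -> a*b+1 != 0 -> (2:F) != 0 ->
  Pair l a b s B22 C12.
Proof. move=> hl hs hab h2.  (pairtac hs; field; by rewrite ?hl ?hab ?h2). Qed.
Lemma p_B22_C21 (F : fieldType) (l a b s : F) : l != 0 -> s * s = (a*b+1)^-1 -> a*b+1 != 0 -> (2:F) != 0 ->
  Pair l a b s B22 C21.
Proof. move=> hl hs hab h2.  (pairtac hs; field; by rewrite ?hl ?hab ?h2). Qed.
Lemma p_B22_C22 (F : fieldType) (l a b s : F) : l != 0 -> s * s = (a*b+1)^-1 -> a*b+1 != 0 -> (2:F) != 0 ->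
  Pair l a b s B22 C22.
Proof. move=> hl hs hab h2.  (pairtac hs; field; by rewrite ?hl ?hab ?h2). Qed.
Lemma p_C11_E1 (F : fieldType) (l a b s : F) : l != 0 -> s * s = (a*b+1)^-1 -> a*b+1 != 0 -> (2:F) != 0 ->
  Pair l a b s C11 E1.
Proof. move=> hl hs hab h2.  (pairtac hs; field; by rewrite ?hl ?hab ?h2). Qed.
Lemma p_C11_F1 (F : fieldType) (l a b s : F) : l != 0 -> s * s = (a*b+1)^-1 -> a*b+1 != 0 -> (2:F) != 0 ->
  Pair l a b s C11 F1.
Proof. move=> hl hs hab h2.  (pairtac hs; field; by rewrite ?hl ?hab ?h2). Qed.
Lemma p_C11_H1 (F : fieldType) (l a b s : F) : l != 0 -> s * s = (a*b+1)^-1 -> a*b+1 != 0 -> (2:F) != 0 ->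
  Pair l a b s C11 H1.
Proof. move=> hl hs hab h2.  (pairtac hs; field; by rewrite ?hl ?hab ?h2). Qed.
Lemma p_C11_E2 (F : fieldType) (l a b s : F) : l != 0 -> s * s = (a*b+1)^-1 -> a*b+1 != 0 -> (2:F) != 0 ->
  Pair l a b s C11 E2.
Proof. move=> hl hs hab h2.  (pairtac hs; field; by rewrite ?hl ?hab ?h2). Qed.
Lemma p_C11_F2 (F : fieldType) (l a b s : F) : l != 0 -> s * s = (a*b+1)^-1 -> a*b+1 != 0 -> (2:F) != 0 ->
  Pair l a b s C11 F2.
Proof. move=> hl hs hab h2.  (pairtac hs; field; by rewrite ?hl ?hab ?h2). Qed.
Lemma p_C11_H2 (F : fieldType) (l a b s : F) : l != 0 -> s * s = (a*b+1)^-1 -> a*b+1 != 0 -> (2:F) != 0 ->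
  Pair l a b s C11 H2.
Proof. move=> hl hs hab h2.  (pairtac hs; field; by rewrite ?hl ?hab ?h2). Qed.
Lemma p_C11_B11 (F : fieldType) (l a b s : F) : l != 0 -> s * s = (a*b+1)^-1 -> a*b+1 != 0 -> (2:F) != 0 ->
  Pair l a b s C11 B11.
Proof. move=> hl hs hab h2.  (pairtac hs; field; by rewrite ?hl ?hab ?h2). Qed.
Lemma p_C11_B12 (F : fieldType) (l a b s : F) : l != 0 -> s * s = (a*b+1)^-1 -> a*b+1 != 0 -> (2:F) != 0 ->
  Pair l a b s C11 B12.
Proof. move=> hl hs hab h2.  (pairtac hs; field; by rewrite ?hl ?hab ?h2). Qed.
Lemma p_C11_B21 (F : fieldType) (l a b s : F) : l != 0 -> s * s = (a*b+1)^-1 -> a*b+1 != 0 -> (2:F) != 0 ->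
  Pair l a b s C11 B21.
Proof. move=> hl hs hab h2.  (pairtac hs; field; by rewrite ?hl ?hab ?h2). Qed.
Lemma p_C11_B22 (F : fieldType) (l a b s : F) : l != 0 -> s * s = (a*b+1)^-1 -> a*b+1 != 0 -> (2:F) != 0 ->
  Pair l a b s C11 B22.
Proof. move=> hl hs hab h2.  (pairtac hs; field; by rewrite ?hl ?hab ?h2). Qed.
Lemma p_C11_C11 (F : fieldType) (l a b s : F) : l != 0 -> s * s = (a*b+1)^-1 -> a*b+1 != 0 -> (2:F) != 0 ->
  Pair l a b s C11 C11.
Proof. move=> hl hs hab h2.  (pairtac hs; field; by rewrite ?hl ?hab ?h2). Qed.
Lemma p_C11_C12 (F : fieldType) (l a b s : F) : l != 0 -> s * s = (a*b+1)^-1 -> a*b+1 != 0 -> (2:F) != 0 ->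
  Pair l a b s C11 C12.
Proof. move=> hl hs hab h2.  (pairtac hs; field; by rewrite ?hl ?hab ?h2). Qed.
Lemma p_C11_C21 (F : fieldType) (l a b s : F) : l != 0 -> s * s = (a*b+1)^-1 -> a*b+1 != 0 -> (2:F) != 0 ->
  Pair l a b s C11 C21.
Proof. move=> hl hs hab h2.  (pairtac hs; field; by rewrite ?hl ?hab ?h2). Qed.
Lemma p_C11_C22 (F : fieldType) (l a b s : F) : l != 0 -> s * s = (a*b+1)^-1 -> a*b+1 != 0 -> (2:F) != 0 ->
  Pair l a b s C11 C22.
Proof. move=> hl hs hab h2.  (pairtac hs; field; by rewrite ?hl ?hab ?h2). Qed.
Lemma p_C12_E1 (F : fieldType) (l a b s : F) : l != 0 -> s * s = (a*b+1)^-1 -> a*b+1 != 0 -> (2:F) != 0 ->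
  Pair l a b s C12 E1.
Proof. move=> hl hs hab h2.  (pairtac hs; field; by rewrite ?hl ?hab ?h2). Qed.
Lemma p_C12_F1 (F : fieldType) (l a b s : F) : l != 0 -> s * s = (a*b+1)^-1 -> a*b+1 != 0 -> (2:F) != 0 ->
  Pair l a b s C12 F1.
Proof. move=> hl hs hab h2.  (pairtac hs; field; by rewrite ?hl ?hab ?h2). Qed.
Lemma p_C12_H1 (F : fieldType) (l a b s : F) : l != 0 -> s * s = (a*b+1)^-1 -> a*b+1 != 0 -> (2:F) != 0 ->
  Pair l a b s C12 H1.
Proof. move=> hl hs hab h2.  (pairtac hs; field; by rewrite ?hl ?hab ?h2). Qed.
Lemma p_C12_E2 (F : fieldType) (l a b s : F) : l != 0 -> s * s = (a*b+1)^-1 -> a*b+1 != 0 -> (2:F) != 0 ->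
  Pair l a b s C12 E2.
Proof. move=> hl hs hab h2.  (pairtac hs; field; by rewrite ?hl ?hab ?h2). Qed.
Lemma p_C12_F2 (F : fieldType) (l a b s : F) : l != 0 -> s * s = (a*b+1)^-1 -> a*b+1 != 0 -> (2:F) != 0 ->
  Pair l a b s C12 F2.
Proof. move=> hl hs hab h2.  (pairtac hs; field; by rewrite ?hl ?hab ?h2). Qed.
Lemma p_C12_H2 (F : fieldType) (l a b s : F) : l != 0 -> s * s = (a*b+1)^-1 -> a*b+1 != 0 -> (2:F) != 0 ->
  Pair l a b s C12 H2.
Proof. move=> hl hs hab h2.  (pairtac hs; field; by rewrite ?hl ?hab ?h2). Qed.
Lemma p_C12_B11 (F : fieldType) (l a b s : F) : l != 0 -> s * s = (a*b+1)^-1 -> a*b+1 != 0 -> (2:F) != 0 ->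
  Pair l a b s C12 B11.
Proof. move=> hl hs hab h2.  (pairtac hs; field; by rewrite ?hl ?hab ?h2). Qed.
Lemma p_C12_B12 (F : fieldType) (l a b s : F) : l != 0 -> s * s = (a*b+1)^-1 -> a*b+1 != 0 -> (2:F) != 0 ->
  Pair l a b s C12 B12.
Proof. move=> hl hs hab h2.  (pairtac hs; field; by rewrite ?hl ?hab ?h2). Qed.
Lemma p_C12_B21 (F : fieldType) (l a b s : F) : l != 0 -> s * s = (a*b+1)^-1 -> a*b+1 != 0 -> (2:F) != 0 ->
  Pair l a b s C12 B21.
Proof. move=> hl hs hab h2.  (pairtac hs; field; by rewrite ?hl ?hab ?h2). Qed.
Lemma p_C12_B22 (F : fieldType) (l a b s : F) : l != 0 -> s * s = (a*b+1)^-1 -> a*b+1 != 0 -> (2:F) != 0 ->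
  Pair l a b s C12 B22.
Proof. move=> hl hs hab h2.  (pairtac hs; field; by rewrite ?hl ?hab ?h2). Qed.
Lemma p_C12_C11 (F : fieldType) (l a b s : F) : l != 0 -> s * s = (a*b+1)^-1 -> a*b+1 != 0 -> (2:F) != 0 ->
  Pair l a b s C12 C11.
Proof. move=> hl hs hab h2.  (pairtac hs; field; by rewrite ?hl ?hab ?h2). Qed.
Lemma p_C12_C12 (F : fieldType) (l a b s : F) : l != 0 -> s * s = (a*b+1)^-1 -> a*b+1 != 0 -> (2:F) != 0 ->
  Pair l a b s C12 C12.
Proof. move=> hl hs hab h2.  (pairtac hs; field; by rewrite ?hl ?hab ?h2). Qed.
Lemma p_C12_C21 (F : fieldType) (l a b s : F) : l != 0 -> s * s = (a*b+1)^-1 -> a*b+1 != 0 -> (2:F) != 0 ->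
  Pair l a b s C12 C21.
Proof. move=> hl hs hab h2.  (pairtac hs; field; by rewrite ?hl ?hab ?h2). Qed.
Lemma p_C12_C22 (F : fieldType) (l a b s : F) : l != 0 -> s * s = (a*b+1)^-1 -> a*b+1 != 0 -> (2:F) != 0 ->
  Pair l a b s C12 C22.
Proof. move=> hl hs hab h2.  (pairtac hs; field; by rewrite ?hl ?hab ?h2). Qed.
Lemma p_C21_E1 (F : fieldType) (l a b s : F) : l != 0 -> s * s = (a*b+1)^-1 -> a*b+1 != 0 -> (2:F) != 0 ->
  Pair l a b s C21 E1.
Proof. move=> hl hs hab h2.  (pairtac hs; field; by rewrite ?hl ?hab ?h2). Qed.
Lemma p_C21_F1 (F : fieldType) (l a b s : F) : l != 0 -> s * s = (a*b+1)^-1 -> a*b+1 != 0 -> (2:F) != 0 ->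
  Pair l a b s C21 F1.
Proof. move=> hl hs hab h2.  (pairtac hs; field; by rewrite ?hl ?hab ?h2). Qed.
Lemma p_C21_H1 (F : fieldType) (l a b s : F) : l != 0 -> s * s = (a*b+1)^-1 -> a*b+1 != 0 -> (2:F) != 0 ->
  Pair l a b s C21 H1.
Proof. move=> hl hs hab h2.  (pairtac hs; field; by rewrite ?hl ?hab ?h2). Qed.
Lemma p_C21_E2 (F : fieldType) (l a b s : F) : l != 0 -> s * s = (a*b+1)^-1 -> a*b+1 != 0 -> (2:F) != 0 ->
  Pair l a b s C21 E2.
Proof. move=> hl hs hab h2.  (pairtac hs; field; by rewrite ?hl ?hab ?h2). Qed.
Lemma p_C21_F2 (F : fieldType) (l a b s : F) : l != 0 -> s * s = (a*b+1)^-1 -> a*b+1 != 0 -> (2:F) != 0 ->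
  Pair l a b s C21 F2.
Proof. move=> hl hs hab h2.  (pairtac hs; field; by rewrite ?hl ?hab ?h2). Qed.
Lemma p_C21_H2 (F : fieldType) (l a b s : F) : l != 0 -> s * s = (a*b+1)^-1 -> a*b+1 != 0 -> (2:F) != 0 ->
  Pair l a b s C21 H2.
Proof. move=> hl hs hab h2.  (pairtac hs; field; by rewrite ?hl ?hab ?h2). Qed.
Lemma p_C21_B11 (F : fieldType) (l a b s : F) : l != 0 -> s * s = (a*b+1)^-1 -> a*b+1 != 0 -> (2:F) != 0 ->
  Pair l a b s C21 B11.
Proof. move=> hl hs hab h2.  (pairtac hs; field; by rewrite ?hl ?hab ?h2). Qed.
Lemma p_C21_B12 (F : fieldType) (l a b s : F) : l != 0 -> s * s = (a*b+1)^-1 -> a*b+1 != 0 -> (2:F) != 0 ->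
  Pair l a b s C21 B12.
Proof. move=> hl hs hab h2.  (pairtac hs; field; by rewrite ?hl ?hab ?h2). Qed.
Lemma p_C21_B21 (F : fieldType) (l a b s : F) : l != 0 -> s * s = (a*b+1)^-1 -> a*b+1 != 0 -> (2:F) != 0 ->
  Pair l a b s C21 B21.
Proof. move=> hl hs hab h2.  (pairtac hs; field; by rewrite ?hl ?hab ?h2). Qed.
Lemma p_C21_B22 (F : fieldType) (l a b s : F) : l != 0 -> s * s = (a*b+1)^-1 -> a*b+1 != 0 -> (2:F) != 0 ->
  Pair l a b s C21 B22.
Proof. move=> hl hs hab h2.  (pairtac hs; field; by rewrite ?hl ?hab ?h2). Qed.
Lemma p_C21_C11 (F : fieldType) (l a b s : F) : l != 0 -> s * s = (a*b+1)^-1 -> a*b+1 != 0 -> (2:F) != 0 ->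
  Pair l a b s C21 C11.
Proof. move=> hl hs hab h2.  (pairtac hs; field; by rewrite ?hl ?hab ?h2). Qed.
Lemma p_C21_C12 (F : fieldType) (l a b s : F) : l != 0 -> s * s = (a*b+1)^-1 -> a*b+1 != 0 -> (2:F) != 0 ->
  Pair l a b s C21 C12.
Proof. move=> hl hs hab h2.  (pairtac hs; field; by rewrite ?hl ?hab ?h2). Qed.
Lemma p_C21_C21 (F : fieldType) (l a b s : F) : l != 0 -> s * s = (a*b+1)^-1 -> a*b+1 != 0 -> (2:F) != 0 ->
  Pair l a b s C21 C21.
Proof. move=> hl hs hab h2.  (pairtac hs; field; by rewrite ?hl ?hab ?h2). Qed.
Lemma p_C21_C22 (F : fieldType) (l a b s : F) : l != 0 -> s * s = (a*b+1)^-1 -> a*b+1 != 0 -> (2:F) != 0 ->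
  Pair l a b s C21 C22.
Proof. move=> hl hs hab h2.  (pairtac hs; field; by rewrite ?hl ?hab ?h2). Qed.
Lemma p_C22_E1 (F : fieldType) (l a b s : F) : l != 0 -> s * s = (a*b+1)^-1 -> a*b+1 != 0 -> (2:F) != 0 ->
  Pair l a b s C22 E1.
Proof. move=> hl hs hab h2.  (pairtac hs; field; by rewrite ?hl ?hab ?h2). Qed.
Lemma p_C22_F1 (F : fieldType) (l a b s : F) : l != 0 -> s * s = (a*b+1)^-1 -> a*b+1 != 0 -> (2:F) != 0 ->
  Pair l a b s C22 F1.
Proof. move=> hl hs hab h2.  (pairtac hs; field; by rewrite ?hl ?hab ?h2). Qed.
Lemma p_C22_H1 (F : fieldType) (l a b s : F) : l != 0 -> s * s = (a*b+1)^-1 -> a*b+1 != 0 -> (2:F) != 0 ->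
  Pair l a b s C22 H1.
Proof. move=> hl hs hab h2.  (pairtac hs; field; by rewrite ?hl ?hab ?h2). Qed.
Lemma p_C22_E2 (F : fieldType) (l a b s : F) : l != 0 -> s * s = (a*b+1)^-1 -> a*b+1 != 0 -> (2:F) != 0 ->
  Pair l a b s C22 E2.
Proof. move=> hl hs hab h2.  (pairtac hs; field; by rewrite ?hl ?hab ?h2). Qed.
Lemma p_C22_F2 (F : fieldType) (l a b s : F) : l != 0 -> s * s = (a*b+1)^-1 -> a*b+1 != 0 -> (2:F) != 0 ->
  Pair l a b s C22 F2.
Proof. move=> hl hs hab h2.  (pairtac hs; field; by rewrite ?hl ?hab ?h2). Qed.
Lemma p_C22_H2 (F : fieldType) (l a b s : F) : l != 0 -> s * s = (a*b+1)^-1 -> a*b+1 != 0 -> (2:F) != 0 ->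
  Pair l a b s C22 H2.
Proof. move=> hl hs hab h2.  (pairtac hs; field; by rewrite ?hl ?hab ?h2). Qed.
Lemma p_C22_B11 (F : fieldType) (l a b s : F) : l != 0 -> s * s = (a*b+1)^-1 -> a*b+1 != 0 -> (2:F) != 0 ->
  Pair l a b s C22 B11.
Proof. move=> hl hs hab h2.  (pairtac hs; field; by rewrite ?hl ?hab ?h2). Qed.
Lemma p_C22_B12 (F : fieldType) (l a b s : F) : l != 0 -> s * s = (a*b+1)^-1 -> a*b+1 != 0 -> (2:F) != 0 ->
  Pair l a b s C22 B12.
Proof. move=> hl hs hab h2.  (pairtac hs; field; by rewrite ?hl ?hab ?h2). Qed.
Lemma p_C22_B21 (F : fieldType) (l a b s : F) : l != 0 -> s * s = (a*b+1)^-1 -> a*b+1 != 0 -> (2:F) != 0 ->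
  Pair l a b s C22 B21.
Proof. move=> hl hs hab h2.  (pairtac hs; field; by rewrite ?hl ?hab ?h2). Qed.
Lemma p_C22_B22 (F : fieldType) (l a b s : F) : l != 0 -> s * s = (a*b+1)^-1 -> a*b+1 != 0 -> (2:F) != 0 ->
  Pair l a b s C22 B22.
Proof. move=> hl hs hab h2.  (pairtac hs; field; by rewrite ?hl ?hab ?h2). Qed.
Lemma p_C22_C11 (F : fieldType) (l a b s : F) : l != 0 -> s * s = (a*b+1)^-1 -> a*b+1 != 0 -> (2:F) != 0 ->
  Pair l a b s C22 C11.
Proof. move=> hl hs hab h2.  (pairtac hs; field; by rewrite ?hl ?hab ?h2). Qed.
Lemma p_C22_C12 (F : fieldType) (l a b s : F) : l != 0 -> s * s = (a*b+1)^-1 -> a*b+1 != 0 -> (2:F) != 0 ->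
  Pair l a b s C22 C12.
Proof. move=> hl hs hab h2.  (pairtac hs; field; by rewrite ?hl ?hab ?h2). Qed.
Lemma p_C22_C21 (F : fieldType) (l a b s : F) : l != 0 -> s * s = (a*b+1)^-1 -> a*b+1 != 0 -> (2:F) != 0 ->
  Pair l a b s C22 C21.
Proof. move=> hl hs hab h2.  (pairtac hs; field; by rewrite ?hl ?hab ?h2). Qed.
Lemma p_C22_C22 (F : fieldType) (l a b s : F) : l != 0 -> s * s = (a*b+1)^-1 -> a*b+1 != 0 -> (2:F) != 0 ->
  Pair l a b s C22 C22.
Proof. move=> hl hs hab h2.  (pairtac hs; field; by rewrite ?hl ?hab ?h2). Qed.


Lemma theta_pbasis (F : fieldType) (l a b s : F) x :
  theta l a b s (pbasis F x) (zero_c F) = theta_psl l a b s x.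
Proof.
rewrite /theta /pbasis /zero_c !big_cons !big_nil !scale0r !addr0.
by case: x => /=; rewrite !scale0r ?scale1r ?add0r ?addr0.
Qed.

Lemma theta_cbasis (F : fieldType) (l a b s : F) c :
  theta l a b s (zero_p F) (cbasis F c) = theta_cent l a b s c.
Proof.
rewrite /theta /cbasis /zero_p !big_cons !big_nil !scale0r ?add0r.
by case: c => /=; rewrite !scale0r ?scale1r ?add0r ?addr0.
Qed.

Lemma theta_lin (F : fieldType) (l a b s : F) (k : F) u1 u2 z1 z2 :
  theta l a b s (fun x => k * u1 x + u2 x) (fun c => k * z1 c + z2 c)
  = k *: theta l a b s u1 z1 + theta l a b s u2 z2.
Proof.
rewrite /theta !scalerDr !scaler_sumr.
have e1 : forall (T : Type) (r : seq T) (u v : T -> F) (M : T -> 'M[F]_4),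
  \sum_(x <- r) (k * u x + v x) *: M x = \sum_(x <- r) k *: (u x *: M x) + \sum_(x <- r) v x *: M x.
  by move=> T r u v M; rewrite -big_split; apply: eq_bigr => x _; rewrite scalerDl scalerA.
by rewrite !e1 addrACA.
Qed.

Lemma mkf_of (F : fieldType) (M : 'M[F]_4) :
  M = mkf (fun i j => Some (M (inord i) (inord j))).
Proof. by apply/matrixP=> i j; rewrite mxE /= !inord_val. Qed.

Ltac fincbv := apply: mkf_eq16;
  cbv [ov addO mulO negO bl eqn andb Bool.eqb nat_of_ord Nat.pred addF negF scF unitF mulOF
       evenF PhiF ThF repF mulF scommF cocycle cocycle_raw pb_odd].

Lemma Phi_addS (F : fieldType) (l a b s : F) M k :
  Phi l a b s (M + k%:M) = Phi l a b s M + k%:M.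
Proof.
rewrite [M]mkf_of mkfS mkfD !Phi_mkf mkfD; fincbv; ring.
Qed.

Lemma psl_lin_mkf (F : fieldType) (w : pb -> F) :
  psl_lin w = mkf (fun i j => match i, j with
    | 0, 0 => Some (w H1) | 0, 1 => Some (w E1) | 0, 2 => Some (w B11) | 0, 3 => Some (w B12)
    | 1, 0 => Some (w F1) | 1, 1 => Some (- w H1) | 1, 2 => Some (w B21) | 1, 3 => Some (w B22)
    | 2, 0 => Some (w C11) | 2, 1 => Some (w C12) | 2, 2 => Some (w H2) | 2, 3 => Some (w F2)
    | 3, 0 => Some (w C21) | 3, 1 => Some (w C22) | 3, 2 => Some (w E2) | 3, 3 => Some (- w H2)
    | _, _ => None end)%N.
Proof.
rewrite /psl_lin !big_cons big_nil addr0 !rep_mkf; do 3 rewrite ?mkfZ ?mkfN ?mkfD; fincbv; ring.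
Qed.

Lemma theta_decomp (F : fieldType) (l a b s : F) w z :
  theta l a b s w z = Phi l a b s (psl_lin w)
    + (z cc * (s ^+ 2 * (a * b - 1) / 2) + z cplus * (s ^+ 2 * l * a)
       + z cminus * (s ^+ 2 * l^-1 * b))%:M.
Proof.
rewrite psl_lin_mkf Phi_mkf /theta !big_cons !big_nil !theta_mkf /theta_cent /=.
rewrite ?addr0 !mkfS; do 3 rewrite ?mkfZ ?mkfN ?mkfD; fincbv; ring.
Qed.


Lemma homog_theta (F : fieldType) (l a b s : F) x :
  homog (pb_odd x) (theta_psl l a b s x).
Proof.
move=> i j; rewrite theta_mkf mkfZ mkfE.
case: i => [[|[|[|[|i]]]] hi] //; case: j => [[|[|[|[|j]]]] hj] //;
  case: x; cbv [ov addO mulO negO bl eqn andb Bool.eqb nat_of_ord Nat.pred addF negF scF unitF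
       ThF repF pb_odd]; rewrite /idx_odd /= ?mulr0 //.
Qed.

Lemma homog_cent (F : fieldType) (l a b s : F) c :
  homog false (theta_cent l a b s c).
Proof.
move=> i j h.
have /negbTE nij : i != j by apply: contra h => /eqP->; rewrite addbb.
by case: c; rewrite /= mxE nij mulr0n.
Qed.

Lemma cent_comm (F : fieldType) (k : F) p (M : 'M[F]_4) :
  scomm false p k%:M M = 0.
Proof. by rewrite /scomm /= scale1r mul_scalar_mx mul_mx_scalar subrr. Qed.

Lemma pairs (F : fieldType) (l a b s : F) : l != 0 -> s * s = (a*b+1)^-1 -> a*b+1 != 0 -> (2:F) != 0 ->
  forall x y, Pair l a b s x y.
Proof.
move=> hl hs hab h2 x y; case: x; case: y; [ exact: (p_E1_E1 hl hs hab h2) | exact: (p_E1_F1 hl hs hab h2) | exact: (p_E1_H1 hl hs hab h2) | exact: (p_E1_E2 hl hs hab h2) | exact: (p_E1_F2 hl hs hab h2) | exact: (p_E1_H2 hl hs hab h2) | exact: (p_E1_B11 hl hs hab h2) | exact: (p_E1_B12 hl hs hab h2) | exact: (p_E1_B21 hl hs hab h2) | exact: (p_E1_B22 hl hs hab h2) | exact: (p_E1_C11 hl hs hab h2) | exact: (p_E1_C12 hl hs hab h2) | exact: (p_E1_C21 hl hs hab h2) | exact: (p_E1_C22 hl hs hab h2) | exact: (p_F1_E1 hl hs hab h2) | exact: (p_F1_F1 hl hs hab h2) | exact: (p_F1_H1 hl hs hab h2) | exact: (p_F1_E2 hl hs hab h2) | exact: (p_F1_F2 hl hs hab h2) | exact: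 (p_F1_H2 hl hs hab h2) | exact: (p_F1_B11 hl hs hab h2) | exact: (p_F1_B12 hl hs hab h2) | exact: (p_F1_B21 hl hs hab h2) | exact: (p_F1_B22 hl hs hab h2) | exact: (p_F1_C11 hl hs hab h2) | exact: (p_F1_C12 hl hs hab h2) | exact: (p_F1_C21 hl hs hab h2) | exact: (p_F1_C22 hl hs hab h2) | exact: (p_H1_E1 hl hs hab h2) | exact: (p_H1_F1 hl hs hab h2) | exact: (p_H1_H1 hl hs hab h2) | exact: (p_H1_E2 hl hs hab h2) | exact: (p_H1_F2 hl hs hab h2) | exact: (p_H1_H2 hl hs hab h2) | exact: (p_H1_B11 hl hs hab h2) | exact: (p_H1_B12 hl hs hab h2) | exact: (p_H1_B21 hl hs hab h2) | exact: (p_H1_B22 hl hs hab h2) | exact: (p_H1_C11 hl hs hab h2) | exact: (p_H1_C12 hl hs hab h2) | exact: (p_H1_C21 hl hs hab h2) | exact: (p_H1_C22 hl hs hab h2) | exact: (p_E2_E1 hl hs hab h2) | exact: (p_E2_F1 hl hs hab h2) | exact: (p_E2_H1 hl hs hab h2) | exact: (p_E2_E2 hl hs hab h2) | exact: (p_E2_F2 hl hs hab h2) | exact: (p_E2_H2 hl hs hab h2) | exact: (p_E2_B11 hl hs hab h2) | exact: (p_E2_B12 hl hs hab h2) | exact: (p_E2_B21 hl hs hab h2) | exact: (p_E2_B22 hl hs hab h2) | exact: (p_E2_C11 hl hs hab h2) | exact: (p_E2_C12 hl hs hab h2) | exact: (p_E2_C21 hl hs hab h2) | exact: (p_E2_C22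 hl hs hab h2) | exact: (p_F2_E1 hl hs hab h2) | exact: (p_F2_F1 hl hs hab h2) | exact: (p_F2_H1 hl hs hab h2) | exact: (p_F2_E2 hl hs hab h2) | exact: (p_F2_F2 hl hs hab h2) | exact: (p_F2_H2 hl hs hab h2) | exact: (p_F2_B11 hl hs hab h2) | exact: (p_F2_B12 hl hs hab h2) | exact: (p_F2_B21 hl hs hab h2) | exact: (p_F2_B22 hl hs hab h2) | exact: (p_F2_C11 hl hs hab h2) | exact: (p_F2_C12 hl hs hab h2) | exact: (p_F2_C21 hl hs hab h2) | exact: (p_F2_C22 hl hs hab h2) | exact: (p_H2_E1 hl hs hab h2) | exact: (p_H2_F1 hl hs hab h2) | exact: (p_H2_H1 hl hs hab h2) | exact: (p_H2_E2 hl hs hab h2) | exact: (p_H2_F2 hl hs hab h2) | exact: (p_H2_H2 hl hs hab h2) | exact: (p_H2_B11 hl hs hab h2) | exact: (p_H2_B12 hl hs hab h2) | exact: (p_H2_B21 hl hs hab h2) | exact: (p_H2_B22 hl hs hab h2) | exact: (p_H2_C11 hl hs hab h2) | exact: (p_H2_C12 hl hs hab h2) | exact: (p_H2_C21 hl hs hab h2) | exact: (p_H2_C22 hl hs hab h2) | exact: (p_B11_E1 hl hs hab h2) | exact: (p_B11_F1 hl hs hab h2) | exact: (p_B11_H1 hl hs hab h2) | exact: (p_B11_E2 hl hs hab h2) | exact: (p_B11_F2 hl hs hab h2) | exact: (p_B11_H2 hl hs hab h2) | exact: (p_B11_B11 hl hs hab h2) | exact: (p_B11_B12 hl hs hab h2)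 | exact: (p_B11_B21 hl hs hab h2) | exact: (p_B11_B22 hl hs hab h2) | exact: (p_B11_C11 hl hs hab h2) | exact: (p_B11_C12 hl hs hab h2) | exact: (p_B11_C21 hl hs hab h2) | exact: (p_B11_C22 hl hs hab h2) | exact: (p_B12_E1 hl hs hab h2) | exact: (p_B12_F1 hl hs hab h2) | exact: (p_B12_H1 hl hs hab h2) | exact: (p_B12_E2 hl hs hab h2) | exact: (p_B12_F2 hl hs hab h2) | exact: (p_B12_H2 hl hs hab h2) | exact: (p_B12_B11 hl hs hab h2) | exact: (p_B12_B12 hl hs hab h2) | exact: (p_B12_B21 hl hs hab h2) | exact: (p_B12_B22 hl hs hab h2) | exact: (p_B12_C11 hl hs hab h2) | exact: (p_B12_C12 hl hs hab h2) | exact: (p_B12_C21 hl hs hab h2) | exact: (p_B12_C22 hl hs hab h2) | exact: (p_B21_E1 hl hs hab h2) | exact: (p_B21_F1 hl hs hab h2) | exact: (p_B21_H1 hl hs hab h2) | exact: (p_B21_E2 hl hs hab h2) | exact: (p_B21_F2 hl hs hab h2) | exact: (p_B21_H2 hl hs hab h2) | exact: (p_B21_B11 hl hs hab h2) | exact: (p_B21_B12 hl hs hab h2) | exact: (p_B21_B21 hl hs hab h2) | exact: (p_B21_B22 hl hs hab h2) | exact: (p_B21_C11 hl hs hab h2) | exact: (p_B21_C12 hl hs hab h2) | exact: (p_B21_C21 hl hs hab h2) | exact: (p_B21_C22 hl hs hab h2) | exact: (p_B22_E1 hl hs hab h2) | exact: (p_B22_F1 hl hs hab h2) | exact: (p_B22_H1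 hl hs hab h2) | exact: (p_B22_E2 hl hs hab h2) | exact: (p_B22_F2 hl hs hab h2) | exact: (p_B22_H2 hl hs hab h2) | exact: (p_B22_B11 hl hs hab h2) | exact: (p_B22_B12 hl hs hab h2) | exact: (p_B22_B21 hl hs hab h2) | exact: (p_B22_B22 hl hs hab h2) | exact: (p_B22_C11 hl hs hab h2) | exact: (p_B22_C12 hl hs hab h2) | exact: (p_B22_C21 hl hs hab h2) | exact: (p_B22_C22 hl hs hab h2) | exact: (p_C11_E1 hl hs hab h2) | exact: (p_C11_F1 hl hs hab h2) | exact: (p_C11_H1 hl hs hab h2) | exact: (p_C11_E2 hl hs hab h2) | exact: (p_C11_F2 hl hs hab h2) | exact: (p_C11_H2 hl hs hab h2) | exact: (p_C11_B11 hl hs hab h2) | exact: (p_C11_B12 hl hs hab h2) | exact: (p_C11_B21 hl hs hab h2) | exact: (p_C11_B22 hl hs hab h2) | exact: (p_C11_C11 hl hs hab h2) | exact: (p_C11_C12 hl hs hab h2) | exact: (p_C11_C21 hl hs hab h2) | exact: (p_C11_C22 hl hs hab h2) | exact: (p_C12_E1 hl hs hab h2) | exact: (p_C12_F1 hl hs hab h2) | exact: (p_C12_H1 hl hs hab h2) | exact: (p_C12_E2 hl hs hab h2) | exact: (p_C12_F2 hl hs hab h2) | exact: (p_C12_H2 hl hs hab h2) | exact: (p_C12_B11 hl hs hab h2) | exact: (p_C12_B12 hl hs hab h2) | exact: (p_C12_B21 hl hs hab h2) | exact: (p_C12_B22 hl hs hab h2) | exact: (p_C12_C11 hl hs hab h2)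 | exact: (p_C12_C12 hl hs hab h2) | exact: (p_C12_C21 hl hs hab h2) | exact: (p_C12_C22 hl hs hab h2) | exact: (p_C21_E1 hl hs hab h2) | exact: (p_C21_F1 hl hs hab h2) | exact: (p_C21_H1 hl hs hab h2) | exact: (p_C21_E2 hl hs hab h2) | exact: (p_C21_F2 hl hs hab h2) | exact: (p_C21_H2 hl hs hab h2) | exact: (p_C21_B11 hl hs hab h2) | exact: (p_C21_B12 hl hs hab h2) | exact: (p_C21_B21 hl hs hab h2) | exact: (p_C21_B22 hl hs hab h2) | exact: (p_C21_C11 hl hs hab h2) | exact: (p_C21_C12 hl hs hab h2) | exact: (p_C21_C21 hl hs hab h2) | exact: (p_C21_C22 hl hs hab h2) | exact: (p_C22_E1 hl hs hab h2) | exact: (p_C22_F1 hl hs hab h2) | exact: (p_C22_H1 hl hs hab h2) | exact: (p_C22_E2 hl hs hab h2) | exact: (p_C22_F2 hl hs hab h2) | exact: (p_C22_H2 hl hs hab h2) | exact: (p_C22_B11 hl hs hab h2) | exact: (p_C22_B12 hl hs hab h2) | exact: (p_C22_B21 hl hs hab h2) | exact: (p_C22_B22 hl hs hab h2) | exact: (p_C22_C11 hl hs hab h2) | exact: (p_C22_C12 hl hs hab h2) | exact: (p_C22_C21 hl hs hab h2) | exact: (p_C22_C22 hl hs hab h2) ].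
Qed.

Lemma bracket (F : fieldType) (l a b s : F) : l != 0 -> s * s = (a*b+1)^-1 -> a*b+1 != 0 -> (2:F) != 0 ->
  forall (x y : pb) (w : pb -> F),
         (exists k : F, psl_lin w
              - scomm (pb_odd x) (pb_odd y) (psl_rep F x) (psl_rep F y) = k%:M) ->
         theta l a b s w (cocycle F x y)
         = scomm (pb_odd x) (pb_odd y)
             (theta l a b s (pbasis F x) (zero_c F)) (theta l a b s (pbasis F y) (zero_c F)).
Proof.
move=> hl hs hab h2 x y w [k hk].
have := pairs hl hs hab h2 x y; rewrite /Pair.
move=> hP; set S := scomm _ _ (psl_rep F x) _ in hk hP; clearbody S.
rewrite !theta_pbasis -hP theta_decomp.
have hw : psl_lin w = S + k%:M by move/eqP: hk; rewrite subr_eq addrC => /eqP.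
have t : psl_lin w o0 o0 + psl_lin w o1 o1 = 0 by rewrite psl_lin_mkf !mkfE /= subrr.
rewrite hw !mxE /= !mulr1n in t.
have hk2 : k = - ((S o0 o0 + S o1 o1) / 2).
  have e : k * 2 + (S o0 o0 + S o1 o1) = 0.
  by rewrite -[RHS]t; ring.
  have e2 : k * 2 = - (S o0 o0 + S o1 o1) by apply/eqP; rewrite -addr_eq0 e.
  by rewrite -mulNr -e2 mulfK.
rewrite hw Phi_addS -addrA -raddfD /= hk2.
by congr (_ + _%:M); ring.
Qed.

Lemma Emx_tr (F : fieldType) k l : (Emx F k l)^T = Emx F l k.
Proof. by rewrite /Emx trmx_delta. Qed.
Lemma Emx_mul (F : fieldType) k l m : Emx F k l *m Emx F l m = Emx F k m.
Proof. by rewrite /Emx mul_delta_mx. Qed.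
Lemma Emx_ord (F : fieldType) (i j : 'I_4) : delta_mx i j = Emx F i.+1 j.+1.
Proof. by rewrite /Emx /= !inord_val. Qed.
Lemma mkf_tr (F : fieldType) (f : fmat F) : (mkf f)^T = mkf (fun i j => f j i).
Proof. by apply/matrixP=> i j; rewrite !mxE. Qed.

Lemma delta_sandwich (F : fieldType) (U : 'M[F]_4) i j :
  delta_mx i i *m U *m delta_mx j j = U i j *: delta_mx i j.
Proof.
apply/matrixP=> p q; rewrite !mxE (bigD1 j) //= big1 => [|r /negbTE rj]; last first.
  by rewrite !mxE rj /= mulr0.
rewrite addr0 !mxE (bigD1 i) //= big1 => [|r /negbTE ri]; last first.
  by rewrite !mxE ri andbF mul0r.
rewrite addr0 !mxE !eqxx /= ?andbT.
by case: (p == i); case: (q == j); rewrite /= ?mulr1 ?mul1r ?mulr0 ?mul0r.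
Qed.

Lemma irr (F : fieldType) (l a b s : F) : l != 0 -> s != 0 ->
  is_irreducible_srep (theta l a b s).
Proof.
move=> hl hs U _ hinv.
have invT x : (U *m (theta_psl l a b s x)^T <= U)%MS.
  by rewrite -theta_pbasis; apply: hinv.
have invM N1 N2 : (U *m N1 <= U)%MS -> (U *m N2 <= U)%MS -> (U *m (N1 *m N2) <= U)%MS.
  by move=> h1 h2; rewrite mulmxA; apply: submx_trans (submxMr N2 h1) h2.
have step k m N c : (U *m N <= U)%MS -> Emx F k k *m N = c *: Emx F k m -> c != 0 ->
    (Emx F k k <= U)%MS -> (Emx F m m <= U)%MS.
  move=> hN hE hc hk.
  have h1 : (Emx F k k *m N <= U)%MS := submx_trans (submxMr N hk) hN.
  rewrite hE (eqmx_scale _ hc) in h1.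
  by rewrite -(Emx_mul F m k m); apply: submx_trans (submxMl _ _) h1.
have i21 : (U *m Emx F 2 1 <= U)%MS by have := invT E1; rewrite /= Emx_tr.
have i12 : (U *m Emx F 1 2 <= U)%MS by have := invT F1; rewrite /= Emx_tr.
have i34 : (U *m Emx F 3 4 <= U)%MS by have := invT E2; rewrite /= Emx_tr.
have i43 : (U *m Emx F 4 3 <= U)%MS by have := invT F2; rewrite /= Emx_tr.
have e12 : (Emx F 1 1 <= U)%MS -> (Emx F 2 2 <= U)%MS.
  by apply: (step _ _ _ 1 i12); rewrite ?oner_neq0 // Emx_mul scale1r.
have e21 : (Emx F 2 2 <= U)%MS -> (Emx F 1 1 <= U)%MS.
  by apply: (step _ _ _ 1 i21); rewrite ?oner_neq0 // Emx_mul scale1r.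
have e34 : (Emx F 3 3 <= U)%MS -> (Emx F 4 4 <= U)%MS.
  by apply: (step _ _ _ 1 i34); rewrite ?oner_neq0 // Emx_mul scale1r.
have e43 : (Emx F 4 4 <= U)%MS -> (Emx F 3 3 <= U)%MS.
  by apply: (step _ _ _ 1 i43); rewrite ?oner_neq0 // Emx_mul scale1r.
have e24 : (Emx F 2 2 <= U)%MS -> (Emx F 4 4 <= U)%MS.
  apply: (step _ _ _ (- (s * l^-1)) (invT B11)).
    rewrite theta_mkf /= mkfZ mkf_tr !mkfEmx // mkfM mkfZ; fincbv; ring.
  by rewrite oppr_eq0 mulf_neq0 ?invr_eq0.
have e42 : (Emx F 4 4 <= U)%MS -> (Emx F 2 2 <= U)%MS.
  apply: (step _ _ _ (s * l) (invT C11)).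
    rewrite theta_mkf /= mkfZ mkf_tr !mkfEmx // mkfM mkfZ; fincbv; ring.
  by rewrite mulf_neq0.
have all4 : (Emx F 1 1 <= U)%MS /\ (Emx F 2 2 <= U)%MS /\ (Emx F 3 3 <= U)%MS /\ (Emx F 4 4 <= U)%MS
    -> row_full U.
  move=> [h1 [h2 [h3 h4]]]; rewrite -sub1mx.
  have -> : (1%:M : 'M[F]_4) = Emx F 1 1 + Emx F 2 2 + Emx F 3 3 + Emx F 4 4.
    rewrite mkfS !mkfEmx // !mkfD; fincbv; ring.
  by rewrite !addmx_sub.
have ikk : forall k : 'I_4, (U *m Emx F k.+1 k.+1 <= U)%MS.
  case=> [[|[|[|[|k]]]] hk] //=.
  - by rewrite -(Emx_mul F 1 2 1); apply: invM.
  - by rewrite -(Emx_mul F 2 1 2); apply: invM.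
  - by rewrite -(Emx_mul F 3 4 3); apply: invM.
  - by rewrite -(Emx_mul F 4 3 4); apply: invM.
case: (eqVneq U 0) => [->|nz]; [by left | right].
have : [exists i, exists j, U i j != 0].
  apply: contraT => /existsPn h; case/negP: nz; apply/eqP/matrixP => i j.
  by move: (h i) => /existsPn /(_ j) /negPn /eqP ->; rewrite mxE.
case/existsP => i /existsP [j nzij].
have hj : (Emx F j.+1 j.+1 <= U)%MS.
  have h0 : (delta_mx i i *m U *m delta_mx j j <= U)%MS.
    by apply: submx_trans (submxMr _ (submxMl _ U)) _; rewrite Emx_ord ikk.
  rewrite delta_sandwich (eqmx_scale _ nzij) in h0.
  rewrite -Emx_ord -(mul_delta_mx i j j).
  by apply: submx_trans (submxMl _ _) h0.
apply: all4; move: hj; case: j {nzij} => [[|[|[|[|j]]]] hj'] //= h.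
- have := e12 h; have := e24 (e12 h); tauto.
- have := e21 h; have := e24 h; tauto.
- have := e34 h; have := e42 (e34 h); have := e21 (e42 (e34 h)); tauto.
- have := e43 h; have := e42 h; have := e21 (e42 h); tauto.
Qed.

Theorem theorem4p4 (R : rcfType) (l a b s : R[i]) :
  l != 0 -> a * b != -1 -> s ^+ 2 = (a * b + 1)^-1 ->
  is_rep_hpsl (theta l a b s) /\ is_irreducible_srep (theta l a b s).
Proof.
move=> hl hab hs.
have hab' : a * b + 1 != 0 by rewrite addr_eq0.
have hss : s * s = (a * b + 1)^-1 by rewrite -expr2.
have h2 : (2 : R[i]) != 0 by rewrite pnatr_eq0.
have hs0 : s != 0.
  apply/eqP => s0; move: hs; rewrite s0 expr0n /= => /esym/eqP.
  by rewrite invr_eq0 (negbTE hab').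
split; last exact: irr.
split.
- exact: theta_lin.
- by move=> x; rewrite theta_pbasis; apply: homog_theta.
- by move=> c; rewrite theta_cbasis; apply: homog_cent.
- exact: bracket.
- move=> c x; split; [|move=> d]; rewrite !theta_cbasis;
    case: c => /=; try case: d => /=; exact: cent_comm.
Qed.
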